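(* Let $(V,m)$ be a discrete measure space and $(b,c)$ a graph over $(V,m)$. If $Q^{(N)}\neq Q^{(D)}$, then there exists a non-negative function $u\in D(Q^{(N)})\cap\ell^\infty(V)$, $u\not\equiv 0$, with $(\widetilde L+1)u=0$.
   Context: $V$ is a finite or countably infinite set and $m:V\to(0,\infty)$; $(V,m)$ is a discrete measure space. $C(V)$ is the set of all functions $V\to\mathbb C$, $C_c(V)$ the finitely supported ones, and $\ell^2(V,m)$ carries $\langle u,v\rangle=\sum_x u(x)\overline{v(x)}m(x)$. A graph over $(V,m)$ is a pair $(b,c)$ with $c:V\to[0,\infty)$, $b:V\times V\to[0,\infty)$, $b(x,x)=0$, $b(x,y)=b(y,x)$, $\sum_y b(x,y)<\infty$. Let $\widetilde F=\{u\in C(V):\sum_y|b(x,y)u(y)|<\infty\ \forall x\}$ and $\widetilde L u(x)=\frac{1}{m(x)}\sum_y b(x,y)(u(x)-u(y))+\frac{c(x)}{m(x)}u(x)$ for $u\in\widetilde F$. $Q^{(N)}$ is the form on $\ell^2(V,m)$ with domain $D(Q^{(N)})=\{u\in\ell^2(V,m):\frac12\sum_{x,y}b(x,y)|u(x)-u(y)|^2+\sum_x c(x)|u(x)|^2<\infty\}$ and $Q^{(N)}(u,v)=\frac12\sum_{x,y}b(x,y)(u(x)-u(y))\overline{(v(x)-v(y))}+\sum_x c(x)u(x)\overline{v(x)}$; it is non-negative, symmetric and closed, and $D(Q^{(N)})\subseteq\widetilde F$. $Q^{(D)}$ is the closure of the restriction of $Q^{(N)}$ to $C_c(V)$. Two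 forms are equal if they have the same domain and agree on it. *)

(* Defs.v *)
From Stdlib Require Import Reals Lra List ClassicalEpsilon.
Import ListNotations.
Open Scope R_scope.
Set Implicit Arguments.

Definition C := (R * R)%type.
Definition Cof (r : R) : C := (r, 0).
Definition C0 : C := (0, 0).
Definition Cadd (z w : C) : C := (fst z + fst w, snd z + snd w).
Definition Csub (z w : C) : C := (fst z - fst w, snd z - snd w).
Definition Cmul (z w : C) : C :=
  (fst z * fst w - snd z * snd w, fst z * snd w + snd z * fst w).
Definition Cconj (z : C) : C := (fst z, - snd z).
Definition Cscal (r : R) (z : C) : C := (r * fst z, r * snd z).
Definition Cnorm2 (z : C) : R := fst z * fst z + snd z * snd z.

Fixpoint sum_list {T : Type} (f : T -> R) (l : list T) : R :=
  match l with [] => 0 | x :: l' => f x + sum_list f l' end.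

Definition has_sum {T : Type} (f : T -> R) (s : R) : Prop :=
  forall eps, eps > 0 -> exists l0 : list T,
    forall l, NoDup l -> incl l0 l -> Rabs (sum_list f l - s) < eps.

Definition summable {T : Type} (f : T -> R) : Prop := exists s, has_sum f s.

(* the sum (0 if the family is not summable) *)
Definition tsum {T : Type} (f : T -> R) : R :=
  epsilon (inhabits 0) (fun s => has_sum f s).

Definition summableC {T : Type} (f : T -> C) : Prop :=
  summable (fun x => fst (f x)) /\ summable (fun x => snd (f x)).
Definition abs_summableC {T : Type} (f : T -> C) : Prop :=
  summable (fun x => sqrt (Cnorm2 (f x))).
Definition tsumC {T : Type} (f : T -> C) : C :=
  (tsum (fun x => fst (f x)), tsum (fun x => snd (f x))).

Definition countable (V : Type) : Prop :=
  exists f : V -> nat, forall x y, f x = f y -> x = y.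

Definition measure_space (V : Type) (m : V -> R) : Prop :=
  countable V /\ forall x, 0 < m x.

Definition is_graph (V : Type) (b : V -> V -> R) (c : V -> R) : Prop :=
  (forall x, 0 <= c x) /\
  (forall x y, 0 <= b x y) /\
  (forall x, b x x = 0) /\
  (forall x y, b x y = b y x) /\
  (forall x, summable (fun y => b x y)).

Definition fsub {V : Type} (u v : V -> C) : V -> C := fun x => Csub (u x) (v x).

Definition finsupp {V : Type} (u : V -> C) : Prop :=
  exists l : list V, forall x, u x <> C0 -> In x l.

Definition l2 {V : Type} (m : V -> R) (u : V -> C) : Prop :=
  summable (fun x => Cnorm2 (u x) * m x).
Definition l2norm2 {V : Type} (m : V -> R) (u : V -> C) : R :=
  tsum (fun x => Cnorm2 (u x) * m x).

Definition linfty {V : Type} (u : V -> C) : Prop :=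
  exists M, forall x, Cnorm2 (u x) <= M.

Record form (V : Type) := mkForm {
  fdom : (V -> C) -> Prop;
  fval : (V -> C) -> (V -> C) -> C }.

Definition form_eq {V : Type} (F G : form V) : Prop :=
  (forall u, fdom F u <-> fdom G u) /\
  (forall u v, fdom F u -> fdom F v -> fval F u v = fval G u v).

Definition QN_dom {V : Type} (m : V -> R) (b : V -> V -> R) (c : V -> R)
  (u : V -> C) : Prop :=
  l2 m u /\
  summable (fun p : V * V => b (fst p) (snd p) * Cnorm2 (Csub (u (fst p)) (u (snd p)))) /\
  summable (fun x => c x * Cnorm2 (u x)).

Definition QN_val {V : Type} (b : V -> V -> R) (c : V -> R)
  (u v : V -> C) : C :=
  Cadd
    (Cscal (1/2) (tsumC (fun p : V * V =>
        Cscal (b (fst p) (snd p))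
          (Cmul (Csub (u (fst p)) (u (snd p)))
                (Cconj (Csub (v (fst p)) (v (snd p))))))))
    (tsumC (fun x => Cscal (c x) (Cmul (u x) (Cconj (v x))))).

Definition QN {V : Type} (m : V -> R) (b : V -> V -> R) (c : V -> R) : form V :=
  mkForm (QN_dom m b c) (QN_val b c).

Definition restrict_Cc {V : Type} (F : form V) : form V :=
  mkForm (fun u => finsupp u /\ fdom F u) (fval F).

(** Closure of a (closable) form on l^2(V,m):
    u is in the domain iff there is a sequence u_n in the domain of F with
    u_n -> u in l^2(V,m) and u_n Cauchy w.r.t. F; the value is the limit
    of F(u_n, v_n) along such approximating sequences. *)
Definition approx {V : Type} (m : V -> R) (F : form V)
  (un : nat -> V -> C) (u : V -> C) : Prop :=
  (forall n, fdom F (un n)) /\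
  (forall n, l2 m (fsub (un n) u)) /\
  Un_cv (fun n => l2norm2 m (fsub (un n) u)) 0 /\
  (forall eps, eps > 0 -> exists N, forall n k, (n >= N)%nat -> (k >= N)%nat ->
     Cnorm2 (fval F (fsub (un n) (un k)) (fsub (un n) (un k))) < eps).

Definition closure_form {V : Type} (m : V -> R) (F : form V) : form V :=
  mkForm
    (fun u => l2 m u /\ exists un, approx m F un u)
    (fun u v => epsilon (inhabits C0) (fun z =>
       forall un vn, approx m F un u -> approx m F vn v ->
         Un_cv (fun n => Cnorm2 (Csub (fval F (un n) (vn n)) z)) 0)).

Definition QD {V : Type} (m : V -> R) (b : V -> V -> R) (c : V -> R) : form V :=
  closure_form m (restrict_Cc (QN m b c)).

Definition Ftilde {V : Type} (b : V -> V -> R) (u : V -> C) : Prop :=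
  forall x, abs_summableC (fun y => Cscal (b x y) (u y)).

Definition Ltilde {V : Type} (m : V -> R) (b : V -> V -> R) (c : V -> R)
  (u : V -> C) (x : V) : C :=
  Cadd (Cscal (/ m x) (tsumC (fun y => Cscal (b x y) (Csub (u x) (u y)))))
       (Cscal (c x / m x) (u x)).

(* Main.v *)
Require Import Defs.
From Stdlib Require Import Reals Lra Lia List Permutation Classical ClassicalEpsilon FunctionalExtensionality.
Import ListNotations.
Open Scope R_scope.


Lemma sum_list_app {T} (f : T -> R) l1 l2 : sum_list f (l1 ++ l2) = sum_list f l1 + sum_list f l2.
Proof. induction l1; simpl; [lra| rewrite IHl1; lra]. Qed.

Lemma sum_list_perm {T} (f:T->R) l l' : Permutation l l' -> sum_list f l = sum_list f l'.
Proof. induction 1; simpl; lra. Qed.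

Lemma sum_list_ext {T} (f g:T->R) l : (forall x, In x l -> f x = g x) -> sum_list f l = sum_list g l.
Proof. induction l; simpl; intros H; auto. rewrite H, IHl; auto. Qed.

Lemma sum_list_plus {T} (f g:T->R) l : sum_list (fun x => f x + g x) l = sum_list f l + sum_list g l.
Proof. induction l; simpl; lra. Qed.

Lemma sum_list_scal {T} (f:T->R) k l : sum_list (fun x => k * f x) l = k * sum_list f l.
Proof. induction l; simpl; [lra|rewrite IHl; ring]. Qed.

Lemma sum_list_nonneg {T} (f:T->R) l : (forall x, 0 <= f x) -> 0 <= sum_list f l.
Proof. intros H; induction l; simpl; [lra| specialize (H a); lra]. Qed.

Lemma sum_list_le {T} (f g:T->R) l : (forall x, f x <= g x) -> sum_list f l <= sum_list g l.
Proof. intros H; induction l; simpl; [lra| specialize (H a); lra]. Qed.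

Lemma sum_list_abs {T} (f:T->R) l : Rabs (sum_list f l) <= sum_list (fun x => Rabs (f x)) l.
Proof. induction l; simpl. rewrite Rabs_R0; lra.
  eapply Rle_trans; [apply Rabs_triang|lra]. Qed.

Definition inb {T} (l : list T) (x:T) : bool :=
  if excluded_middle_informative (In x l) then true else false.

Lemma inb_spec {T} (l : list T) x : inb l x = true <-> In x l.
Proof. unfold inb; destruct excluded_middle_informative; split; intuition; discriminate. Qed.

Lemma sum_list_filter {T} (f:T->R) (P: T->bool) l :
  sum_list f l = sum_list f (filter P l) + sum_list f (filter (fun x => negb (P x)) l).
Proof. induction l; simpl; [lra|]. destruct (P a); simpl; lra. Qed.

Lemma sum_incl_split {T} (f:T->R) l0 l : NoDup l0 -> NoDup l -> incl l0 l ->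
  sum_list f l = sum_list f l0 + sum_list f (filter (fun x => negb (inb l0 x)) l).
Proof.
  intros H0 H1 H2. rewrite (sum_list_filter f (inb l0) l). f_equal.
  apply sum_list_perm. apply NoDup_Permutation; [apply NoDup_filter; auto | auto |].
  intro x; rewrite filter_In, inb_spec; split; intuition.
Qed.

Lemma sum_incl_le {T} (f:T->R) l0 l : (forall x, 0 <= f x) -> NoDup l0 -> NoDup l -> incl l0 l ->
  sum_list f l0 <= sum_list f l.
Proof.
  intros Hf H0 H1 H2. rewrite (sum_incl_split f l0 l); auto.
  pose proof (sum_list_nonneg f (filter (fun x => negb (inb l0 x)) l) Hf). lra.
Qed.

Lemma dedup {T} (l : list T) : exists l', NoDup l' /\ forall x, In x l <-> In x l'.
Proof.
  induction l as [|a l [l' [H1 H2]]].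
  - exists []; split; [constructor| tauto].
  - destruct (classic (In a l')).
    + exists l'; split; auto; intro x; simpl; rewrite H2; split; intuition; subst; auto.
    + exists (a::l'); split; [constructor; auto|]. intro x; simpl; rewrite H2; tauto.
Qed.

Lemma has_sum_unique {T} (f:T->R) s s' : has_sum f s -> has_sum f s' -> s = s'.
Proof.
  intros H H'. destruct (Req_dec s s') as [|Hne]; auto. exfalso.
  assert (He : Rabs (s - s') / 2 > 0).
  { apply Rdiv_lt_0_compat; [apply Rabs_pos_lt; lra| lra]. }
  destruct (H _ He) as [l0 Hl0]. destruct (H' _ He) as [l0' Hl0'].
  destruct (dedup (l0 ++ l0')) as [l [Hn Hi]].
  assert (A1 := Hl0 l Hn (fun x h => proj1 (Hi x) (in_or_app _ _ _ (or_introl h)))).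
  assert (A2 := Hl0' l Hn (fun x h => proj1 (Hi x) (in_or_app _ _ _ (or_intror h)))).
  assert (Rabs (s - s') <= Rabs (sum_list f l - s) + Rabs (sum_list f l - s')).
  { replace (s - s') with (-(sum_list f l - s) + (sum_list f l - s')) by ring.
    eapply Rle_trans; [apply Rabs_triang|]. rewrite Rabs_Ropp; lra. }
  lra.
Qed.

Lemma tsum_eq {T} (f:T->R) s : has_sum f s -> tsum f = s.
Proof.
  intros H. unfold tsum. apply (has_sum_unique f); auto.
  apply epsilon_spec. exists s; auto.
Qed.

Lemma tsum_spec {T} (f:T->R) : summable f -> has_sum f (tsum f).
Proof. intros [s H]. rewrite (tsum_eq f s H); auto. Qed.

Lemma has_sum_plus {T} (f g:T->R) s t : has_sum f s -> has_sum g t -> has_sum (fun x => f x + g x) (s + t).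
Proof.
  intros H H' eps He. destruct (H (eps/2)) as [l0 Hl0]; [lra|].
  destruct (H' (eps/2)) as [l0' Hl0']; [lra|].
  exists (l0 ++ l0'). intros l Hn Hi. rewrite sum_list_plus.
  assert (A1 := Hl0 l Hn (fun x h => Hi x (in_or_app _ _ _ (or_introl h)))).
  assert (A2 := Hl0' l Hn (fun x h => Hi x (in_or_app _ _ _ (or_intror h)))).
  replace (sum_list f l + sum_list g l - (s + t)) with ((sum_list f l - s) + (sum_list g l - t)) by ring.
  eapply Rle_lt_trans; [apply Rabs_triang|lra].
Qed.

Lemma has_sum_scal {T} (f:T->R) k s : has_sum f s -> has_sum (fun x => k * f x) (k * s).
Proof.
  intros H eps He. destruct (H (eps / (Rabs k + 1))) as [l0 Hl0].
  { apply Rdiv_lt_0_compat; auto. pose proof (Rabs_pos k); lra. }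
  exists l0. intros l Hn Hi. rewrite sum_list_scal.
  replace (k * sum_list f l - k * s) with (k * (sum_list f l - s)) by ring.
  rewrite Rabs_mult. specialize (Hl0 l Hn Hi).
  assert (Hk : 0 <= Rabs k) by apply Rabs_pos.
  assert (Rabs k * Rabs (sum_list f l - s) <= Rabs k * (eps / (Rabs k + 1))).
  { apply Rmult_le_compat_l; lra. }
  assert (Rabs k * (eps / (Rabs k + 1)) < eps).
  { unfold Rdiv. rewrite <- Rmult_assoc. apply (Rmult_lt_reg_r (Rabs k + 1)); [lra|].
    rewrite Rmult_assoc, Rinv_l; lra. }
  lra.
Qed.

Lemma has_sum_ext {T} (f g:T->R) s : (forall x, f x = g x) -> has_sum f s -> has_sum g s.
Proof. intros H. replace g with f; auto. apply functional_extensionality; auto. Qed.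

Lemma tsum_ext {T} (f g:T->R) : (forall x, f x = g x) -> tsum f = tsum g.
Proof. intros H. replace g with f; auto. apply functional_extensionality; auto. Qed.

Lemma summable_plus {T} (f g:T->R) : summable f -> summable g -> summable (fun x => f x + g x).
Proof. intros [s H] [t H']. exists (s+t); apply has_sum_plus; auto. Qed.

Lemma summable_scal {T} (f:T->R) k : summable f -> summable (fun x => k * f x).
Proof. intros [s H]. exists (k*s); apply has_sum_scal; auto. Qed.

Lemma tsum_plus {T} (f g:T->R) : summable f -> summable g -> tsum (fun x => f x + g x) = tsum f + tsum g.
Proof. intros Hf Hg. apply tsum_eq, has_sum_plus; apply tsum_spec; auto. Qed.

Lemma tsum_scal {T} (f:T->R) k : summable f -> tsum (fun x => k * f x) = k * tsum f.
Proof. intros Hf. apply tsum_eq, has_sum_scal; apply tsum_spec; auto. Qed.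

Lemma summable_minus {T} (f g:T->R) : summable f -> summable g -> summable (fun x => f x - g x).
Proof. intros Hf Hg. apply (summable_plus f (fun x => -1 * g x)) in Hf; [|apply summable_scal; auto].
  destruct Hf as [s H]; exists s; eapply has_sum_ext; [|apply H]. intros; simpl; ring. Qed.

Lemma tsum_minus {T} (f g:T->R) : summable f -> summable g -> tsum (fun x => f x - g x) = tsum f - tsum g.
Proof. intros Hf Hg. rewrite (tsum_ext _ (fun x => f x + (-1) * g x)) by (intros; ring).
  rewrite tsum_plus, tsum_scal; auto; [ring|apply summable_scal; auto]. Qed.

Lemma has_sum_nonneg_le {T} (f:T->R) s : (forall x, 0 <= f x) -> has_sum f s ->
  forall l, NoDup l -> sum_list f l <= s.
Proof.
  intros Hf H l Hl. destruct (Rle_lt_dec (sum_list f l) s) as [|Hlt]; auto. exfalso.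
  destruct (H (sum_list f l - s)) as [l0 Hl0]; [lra|].
  destruct (dedup (l0 ++ l)) as [l' [Hn Hi]].
  assert (A1 := Hl0 l' Hn (fun x h => proj1 (Hi x) (in_or_app _ _ _ (or_introl h)))).
  assert (sum_list f l <= sum_list f l').
  { apply sum_incl_le; auto. intros x h; apply Hi, in_or_app; auto. }
  apply Rabs_def2 in A1. lra.
Qed.

Lemma tsum_ge_list {T} (f:T->R) l : (forall x, 0 <= f x) -> summable f -> NoDup l -> sum_list f l <= tsum f.
Proof. intros Hf Hs Hl. apply has_sum_nonneg_le; auto. apply tsum_spec; auto. Qed.

Lemma tsum_nonneg {T} (f:T->R) : (forall x, 0 <= f x) -> summable f -> 0 <= tsum f.
Proof. intros. apply (tsum_ge_list f []); auto. constructor. Qed.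

Lemma tsum_ge_single {T} (f:T->R) x : (forall x, 0 <= f x) -> summable f -> f x <= tsum f.
Proof. intros. pose proof (tsum_ge_list f [x]); simpl in *. apply Rle_trans with (f x + 0); [lra|].
  apply H1; auto. constructor; [intro h; inversion h|constructor]. Qed.

Lemma nonneg_bounded_summable {T} (f:T->R) K : (forall x, 0 <= f x) ->
  (forall l, NoDup l -> sum_list f l <= K) -> summable f /\ tsum f <= K.
Proof.
  intros Hf HK.
  set (E := fun r => exists l, NoDup l /\ r = sum_list f l).
  assert (HB : bound E). { exists K; intros r [l [Hl ->]]; auto. }
  assert (HE : exists r, E r). { exists 0, []; split; [constructor| reflexivity]. }
  destruct (completeness E HB HE) as [s [Hub Hlub]].
  assert (Hs : has_sum f s).
  { intros eps He.
    destruct (classic (exists l, NoDup l /\ s - eps < sum_list f l)) as [[l0 [Hn0 Hl0]]|Hno].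
    - exists l0. intros l Hn Hi.
      assert (sum_list f l0 <= sum_list f l) by (apply sum_incl_le; auto).
      assert (sum_list f l <= s) by (apply Hub; exists l; auto).
      apply Rabs_def1; lra.
    - exfalso. assert (s <= s - eps); [|lra]. apply Hlub. intros r [l [Hl ->]].
      destruct (Rle_lt_dec (sum_list f l) (s - eps)); auto. exfalso; apply Hno; exists l; auto. }
  split; [exists s; auto|]. rewrite (tsum_eq f s Hs). apply Hlub. intros r [l [Hl ->]]. auto.
Qed.

Lemma summable_compare {T} (f g:T->R) : (forall x, 0 <= f x <= g x) -> summable g ->
  summable f /\ tsum f <= tsum g.
Proof.
  intros H Hg. apply nonneg_bounded_summable; [intros x; apply H|].
  intros l Hl. apply Rle_trans with (sum_list g l); [apply sum_list_le; intros; apply H|].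
  apply tsum_ge_list; auto. intros x; specialize (H x); lra.
Qed.

Lemma summable_abs_compare {T} (f g:T->R) : (forall x, Rabs (f x) <= g x) -> summable g ->
  summable f /\ Rabs (tsum f) <= tsum g.
Proof.
  intros H Hg.
  assert (Hp : summable (fun x => Rmax (f x) 0) /\ tsum (fun x => Rmax (f x) 0) <= tsum g).
  { apply summable_compare; auto. intros x; specialize (H x); split; [apply Rmax_r|].
    apply Rmax_lub; [eapply Rle_trans; [apply Rle_abs|auto]| pose proof (Rabs_pos (f x)); lra]. }
  assert (Hn : summable (fun x => Rmax (- f x) 0) /\ tsum (fun x => Rmax (- f x) 0) <= tsum g).
  { apply summable_compare; auto. intros x; specialize (H x); split; [apply Rmax_r|].
    apply Rmax_lub; [eapply Rle_trans; [apply Rle_abs|rewrite Rabs_Ropp; auto]| pose proof (Rabs_pos (f x)); lra]. }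
  destruct Hp as [Hp1 Hp2], Hn as [Hn1 Hn2].
  assert (Heq : forall x, f x = Rmax (f x) 0 - Rmax (- f x) 0).
  { intros x. unfold Rmax. repeat destruct Rle_dec; lra. }
  assert (Hs : summable f).
  { destruct (summable_minus _ _ Hp1 Hn1) as [s Hs]; exists s; eapply has_sum_ext; [|apply Hs]; intros; simpl; rewrite <- Heq; auto. }
  split; auto.
  assert (Ht : tsum f = tsum (fun x => Rmax (f x) 0) - tsum (fun x => Rmax (- f x) 0)).
  { rewrite <- tsum_minus; auto. apply tsum_ext; auto. }
  assert (tsum (fun x => Rmax (f x) 0) + tsum (fun x => Rmax (- f x) 0) <= tsum g).
  { rewrite <- tsum_plus; auto. apply summable_compare; auto.
    intros x; specialize (H x); split; [pose proof (Rmax_r (f x) 0); pose proof (Rmax_r (-f x) 0); lra|].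
    eapply Rle_trans; [|apply H]. unfold Rmax; repeat destruct Rle_dec; unfold Rabs; destruct Rcase_abs; lra. }
  pose proof (tsum_nonneg (fun x => Rmax (f x) 0) (fun x => Rmax_r _ _) Hp1).
  pose proof (tsum_nonneg (fun x => Rmax (- f x) 0) (fun x => Rmax_r _ _) Hn1).
  rewrite Ht. apply Rabs_le. lra.
Qed.

Lemma tsum_le {T} (f g:T->R) : (forall x, f x <= g x) -> summable f -> summable g -> tsum f <= tsum g.
Proof. intros H Hf Hg. assert (0 <= tsum (fun x => g x - f x)).
  { apply tsum_nonneg; [intros x; specialize (H x); lra| apply summable_minus; auto]. }
  rewrite tsum_minus in H0; auto; lra. Qed.


Definition preimg {A B} (e : A -> B) (y : B) : list A :=
  match excluded_middle_informative (exists a, e a = y) with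
  | left H => [proj1_sig (constructive_indefinite_description _ H)]
  | right _ => []
  end.



Lemma has_sum_embed {A B} (e : A -> B) (g : B -> R) s :
  (forall a a', e a = e a' -> a = a') -> (forall y, (forall a, e a <> y) -> g y = 0) ->
  has_sum (fun a => g (e a)) s -> has_sum g s.
Proof.
  intros Hinj Hz H eps He. destruct (H eps He) as [l0 Hl0].
  exists (map e l0). intros l Hn Hi.
  set (lA := flat_map (preimg e) l).
  assert (Hsum : sum_list g l = sum_list (fun a => g (e a)) lA).
  { unfold lA; clear Hn Hi. induction l as [|y l IH]; simpl; auto.
    rewrite sum_list_app, IH. f_equal. unfold preimg.
    destruct excluded_middle_informative as [Hy|Hy].
    - destruct constructive_indefinite_description as [a0 Ha0]; simpl. rewrite Ha0; ring.
    - simpl. rewrite Hz; [ring|]. intros a h; apply Hy; eauto. }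
  assert (HinA : forall a, In a lA <-> In (e a) l).
  { intros a. unfold lA. rewrite in_flat_map. split.
    - intros [y [Hy Ha]]. unfold preimg in Ha. destruct excluded_middle_informative as [Hy'|Hy'].
      + destruct constructive_indefinite_description as [a0 Ha0]; simpl in Ha. destruct Ha as [<-|[]]. rewrite Ha0; auto.
      + destruct Ha.
    - intros h. exists (e a); split; auto. unfold preimg. destruct excluded_middle_informative as [Hy'|Hy'].
      + destruct constructive_indefinite_description as [a0 Ha0]; simpl. left; auto.
      + exfalso; apply Hy'; eauto. }
  assert (HnA : NoDup lA).
  { unfold lA. clear Hi Hsum HinA. induction Hn as [|y l Hy Hn IH]; simpl; [constructor|].
    unfold preimg at 1. destruct excluded_middle_informative as [Hy'|Hy'].
    - destruct constructive_indefinite_description as [a0 Ha0]; simpl. constructor; auto.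
      intro h. apply in_flat_map in h. destruct h as [y' [Hy'' Ha]]. unfold preimg in Ha.
      destruct excluded_middle_informative as [H3|H3]; [|destruct Ha].
      destruct constructive_indefinite_description as [a1 Ha1]; simpl in Ha. destruct Ha as [->|[]].
      apply Hy. rewrite <- Ha0, Ha1; auto.
    - simpl; auto. }
  rewrite Hsum. apply Hl0; auto. intros a h. apply HinA. apply Hi. apply in_map; auto.
Qed.

Lemma has_sum_single {T} (g : T -> R) x0 : (forall y, y <> x0 -> g y = 0) -> has_sum g (g x0).
Proof.
  intros H. apply (has_sum_embed (fun _ : unit => x0) g).
  - intros [] []; auto.
  - intros y Hy. apply H. intro h; apply (Hy tt); auto.
  - intros eps He. exists [tt]. intros l Hn Hi. destruct l as [|[] [|[] l]].
    + exfalso; apply (Hi tt); simpl; auto.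
    + simpl. replace (g x0 + 0 - g x0) with 0 by ring. rewrite Rabs_R0; auto.
    + inversion Hn; subst. exfalso; apply H2; simpl; auto.
Qed.

Lemma has_sum_sum {A B} (g : A + B -> R) s t :
  has_sum (fun a => g (inl a)) s -> has_sum (fun b => g (inr b)) t -> has_sum g (s + t).
Proof.
  intros H1 H2.
  assert (E1 : has_sum (fun i : A + B => match i with inl a => g (inl a) | inr _ => 0 end) s).
  { apply (has_sum_embed (@inl A B)); auto. intros a a' h; inversion h; auto.
    intros [a|b] h; auto. exfalso; apply (h a); auto. }
  assert (E2 : has_sum (fun i : A + B => match i with inr b => g (inr b) | inl _ => 0 end) t).
  { apply (has_sum_embed (@inr A B)); auto. intros a a' h; inversion h; auto.
    intros [a|b] h; auto. exfalso; apply (h b); auto. }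
  eapply has_sum_ext; [|apply (has_sum_plus _ _ _ _ E1 E2)]. intros [a|b]; simpl; ring.
Qed.

Lemma nodup_map_inj {A B} (e : A -> B) l : (forall a a', e a = e a' -> a = a') -> NoDup l -> NoDup (map e l).
Proof. intros Hi Hn; induction Hn; simpl; constructor; auto. intro h; apply in_map_iff in h.
  destruct h as [y [h1 h2]]. apply Hi in h1; subst; auto. Qed.

Lemma sum_list_map {A B} (g : B -> R) (e : A -> B) l : sum_list g (map e l) = sum_list (fun a => g (e a)) l.
Proof. induction l; simpl; auto; rewrite IHl; auto. Qed.

Lemma summable_restrict {A B} (e : A -> B) (g : B -> R) :
  (forall a a', e a = e a' -> a = a') -> (forall y, 0 <= g y) -> summable g ->
  summable (fun a => g (e a)) /\ tsum (fun a => g (e a)) <= tsum g.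
Proof.
  intros Hi Hp Hs. apply nonneg_bounded_summable; auto. intros l Hl.
  rewrite <- sum_list_map. apply tsum_ge_list; auto. apply nodup_map_inj; auto.
Qed.

Lemma summable_sum_iff {A B} (g : A + B -> R) : (forall y, 0 <= g y) ->
  (summable g <-> summable (fun a => g (inl a)) /\ summable (fun b => g (inr b))).
Proof.
  intros Hp; split.
  - intros Hs; split; apply summable_restrict; auto; intros a a' h; inversion h; auto.
  - intros [[s H1] [t H2]]. exists (s+t). apply has_sum_sum; auto.
Qed.

Lemma tsum_sum {A B} (g : A + B -> R) :
  summable (fun a => g (inl a)) -> summable (fun b => g (inr b)) ->
  tsum g = tsum (fun a => g (inl a)) + tsum (fun b => g (inr b)).
Proof. intros H1 H2. apply tsum_eq, has_sum_sum; apply tsum_spec; auto. Qed.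

Lemma cv_sum_list {T} (F : nat -> T -> R) (G : T -> R) l :
  (forall i, Un_cv (fun n => F n i) (G i)) -> Un_cv (fun n => sum_list (F n) l) (sum_list G l).
Proof.
  intros H. induction l as [|a l IH]; simpl.
  - intros eps He; exists 0%nat; intros; unfold R_dist; rewrite Rminus_diag, Rabs_R0; auto.
  - apply CV_plus; auto.
Qed.

Lemma cv_le {u : nat -> R} L K N : Un_cv u L -> (forall n, (n >= N)%nat -> u n <= K) -> L <= K.
Proof.
  intros H HK. destruct (Rle_lt_dec L K) as [|Hl]; auto. exfalso.
  destruct (H (L - K)) as [N' HN']; [lra|]. specialize (HN' (max N N') ltac:(lia)).
  specialize (HK (max N N') ltac:(lia)). unfold R_dist in HN'. apply Rabs_def2 in HN'. lra.
Qed.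

Lemma tail_small {T} (f : T -> R) : (forall x, 0 <= f x) -> summable f ->
  forall eps, eps > 0 -> exists l0, NoDup l0 /\
   forall l, NoDup l -> (forall x, In x l -> ~ In x l0) -> sum_list f l < eps.
Proof.
  intros Hp [s Hs] eps He. destruct (Hs (eps/2)) as [l0' Hl0]; [lra|].
  destruct (dedup l0') as [l0 [Hn Hi]]. exists l0; split; auto.
  intros l Hl Hd.
  assert (Hn2 : NoDup (l0 ++ l)). { apply NoDup_app; auto. intros a h1 h2; apply (Hd a); auto. }
  assert (A1 := Hl0 (l0 ++ l) Hn2 (fun x h => in_or_app _ _ _ (or_introl (proj1 (Hi x) h)))).
  assert (A2 := Hl0 l0 Hn (fun x h => proj1 (Hi x) h)).
  rewrite sum_list_app in A1. apply Rabs_def2 in A1. apply Rabs_def2 in A2. lra.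
Qed.


Lemma summable_ext {T} (f g:T->R) : (forall x, f x = g x) -> summable f -> summable g.
Proof. intros H. replace g with f; auto. apply functional_extensionality; auto. Qed.

Lemma Rabs_le_inv (x a : R) : Rabs x <= a -> -a <= x <= a.
Proof. unfold Rabs; destruct Rcase_abs; lra. Qed.

Definition ss {I} (g:I->R) := summable (fun i => g i * g i).
Definition S2 {I} (g:I->R) := tsum (fun i => g i * g i).
Definition B2 {I} (g h:I->R) := tsum (fun i => g i * h i).

Lemma sq_abs (a : R) : a * a = Rabs a * Rabs a.
Proof. rewrite <- Rabs_mult. rewrite Rabs_right; nra. Qed.

Lemma sq_abs_le (a b : R) : Rabs a <= Rabs b -> a * a <= b * b.
Proof. intros H. rewrite (sq_abs a), (sq_abs b). pose proof (Rabs_pos a). nra. Qed.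

Lemma prod_bound (a b t : R) : t > 0 -> Rabs (a * b) <= (t * (a*a) + (b*b) / t) / 2.
Proof.
  intros Ht. rewrite Rabs_mult.
  assert (2 * t * (Rabs a * Rabs b) <= t * t * (a * a) + b * b).
  { rewrite (sq_abs a), (sq_abs b).
    pose proof (Rle_0_sqr (t * Rabs a - Rabs b)); unfold Rsqr in *. nra. }
  apply (Rmult_le_reg_l (2 * t)); [lra|].
  replace (2 * t * ((t * (a * a) + b * b / t) / 2)) with (t * t * (a*a) + b*b) by (field; lra). lra.
Qed.

Lemma ss_prod {I} (g h : I -> R) : ss g -> ss h -> summable (fun i => g i * h i).
Proof.
  intros Hg Hh. apply (summable_abs_compare _ (fun i => (1 * (g i * g i) + (h i * h i) / 1) / 2)).
  - intros; apply prod_bound; lra.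
  - apply (summable_ext (fun i => /2 * (g i * g i + h i * h i))); [intros; field|].
    apply summable_scal, summable_plus; auto.
Qed.

Lemma ss_plus {I} (g h : I -> R) : ss g -> ss h -> ss (fun i => g i + h i).
Proof.
  intros Hg Hh. apply (summable_compare _ (fun i => 2 * (g i * g i + h i * h i))).
  - intros i; pose proof (Rle_0_sqr (g i - h i)); pose proof (Rle_0_sqr (g i + h i)); unfold Rsqr in *; split; nra.
  - apply summable_scal, summable_plus; auto.
Qed.

Lemma ss_scal {I} (g : I -> R) k : ss g -> ss (fun i => k * g i).
Proof. intros Hg. apply (summable_ext (fun i => (k*k) * (g i * g i))); [intros; ring|].
  apply summable_scal; auto. Qed.

Lemma ss_minus {I} (g h : I -> R) : ss g -> ss h -> ss (fun i => g i - h i).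
Proof. intros Hg Hh. apply (summable_ext (fun i => (g i + (-1) * h i) * (g i + (-1) * h i))); [intros; ring|].
  apply (ss_plus g (fun i => -1 * h i)); auto. apply ss_scal; auto. Qed.

Lemma S2_nonneg {I} (g : I -> R) : ss g -> 0 <= S2 g.
Proof. intros; apply tsum_nonneg; auto. intros; nra. Qed.

Lemma S2_plus {I} (g h : I -> R) : ss g -> ss h ->
  S2 (fun i => g i + h i) = S2 g + 2 * B2 g h + S2 h.
Proof.
  intros Hg Hh. unfold S2, B2.
  rewrite (tsum_ext _ (fun i => (g i * g i + 2 * (g i * h i)) + h i * h i)) by (intros; ring).
  rewrite tsum_plus, tsum_plus, tsum_scal; auto; try apply summable_scal; try apply summable_plus;
    try apply summable_scal; try apply ss_prod; auto.
Qed.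

Lemma S2_minus {I} (g h : I -> R) : ss g -> ss h ->
  S2 (fun i => g i - h i) = S2 g - 2 * B2 g h + S2 h.
Proof.
  intros Hg Hh. unfold S2, B2.
  rewrite (tsum_ext _ (fun i => (g i * g i + (-2) * (g i * h i)) + h i * h i)) by (intros; ring).
  rewrite tsum_plus, tsum_plus, tsum_scal; auto; try apply summable_scal; try apply summable_plus;
    try apply summable_scal; try apply ss_prod; auto. ring.
Qed.

Lemma S2_scal {I} (g : I -> R) k : ss g -> S2 (fun i => k * g i) = k * k * S2 g.
Proof. intros Hg. unfold S2. rewrite (tsum_ext _ (fun i => (k*k) * (g i * g i))) by (intros; ring).
  apply tsum_scal; auto. Qed.

Lemma B2_bound {I} (g h : I -> R) t : t > 0 -> ss g -> ss h -> Rabs (B2 g h) <= (t * S2 g + S2 h / t) / 2.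
Proof.
  intros Ht Hg Hh. unfold B2, S2.
  replace ((t * tsum (fun i => g i * g i) + tsum (fun i => h i * h i) / t) / 2)
    with (tsum (fun i => (t * (g i * g i) + (h i * h i) / t) / 2)).
  - apply summable_abs_compare; [intros; apply prod_bound; auto|].
    apply (summable_ext (fun i => /2 * (t * (g i * g i) + /t * (h i * h i)))); [intros; field; lra|].
    apply summable_scal, summable_plus; apply summable_scal; auto.
  - rewrite (tsum_ext _ (fun i => /2 * (t * (g i * g i) + /t * (h i * h i)))) by (intros; field; lra).
    rewrite tsum_scal, tsum_plus, !tsum_scal; auto; try (apply summable_plus); try apply summable_scal; auto.
    field; lra.
Qed.

Lemma S2_compare {I} (g h : I -> R) : (forall i, Rabs (g i) <= Rabs (h i)) -> ss h -> ss g /\ S2 g <= S2 h.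
Proof. intros H Hh. apply summable_compare; auto. intros i; split; [nra|apply sq_abs_le; auto]. Qed.

Lemma S2_plus_le {I} (g h : I -> R) : ss g -> ss h -> S2 (fun i => g i + h i) <= 2 * S2 g + 2 * S2 h.
Proof.
  intros Hg Hh. unfold S2. rewrite <- !tsum_scal by auto. rewrite <- tsum_plus by (apply summable_scal; auto).
  apply tsum_le; [intros i; pose proof (Rle_0_sqr (g i - h i)); unfold Rsqr in *; nra| apply ss_plus; auto| apply summable_plus; apply summable_scal; auto].
Qed.

Lemma fatou {I} (G : nat -> I -> R) (g : I -> R) N K :
  (forall i, Un_cv (fun n => G n i) (g i)) -> (forall n, (n >= N)%nat -> ss (G n) /\ S2 (G n) <= K) ->
  ss g /\ S2 g <= K.
Proof.
  intros Hc HK. apply nonneg_bounded_summable; [intros; nra|]. intros l Hl.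
  apply (cv_le (u := fun n => sum_list (fun i => G n i * G n i) l) _ K N).
  - apply (cv_sum_list (fun n i => G n i * G n i)). intros i; apply CV_mult; auto.
  - intros n Hn. destruct (HK n Hn) as [H1 H2]. eapply Rle_trans; [|apply H2].
    apply tsum_ge_list; auto. intros; nra.
Qed.

Lemma dominated {I} (G : nat -> I -> R) (h : I -> R) :
  (forall n i, Rabs (G n i) <= Rabs (h i)) -> ss h -> (forall i, Un_cv (fun n => G n i) 0) ->
  Un_cv (fun n => S2 (G n)) 0.
Proof.
  intros Hd Hh Hc eps He.
  destruct (tail_small (fun i => h i * h i) ltac:(intros; nra) Hh (eps/4)) as [l0 [Hn0 Ht]]; [lra|].
  assert (Hcv := cv_sum_list (fun n i => G n i * G n i) (fun _ => 0) l0
    (fun i => ltac:(replace 0 with (0*0) by ring; apply CV_mult; auto))).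
  destruct (Hcv (eps/4)) as [N HN]; [lra|]. exists N. intros n Hn.
  specialize (HN n Hn). unfold R_dist in *.
  assert (Hz : sum_list (fun _ : I => 0) l0 = 0) by (clear; induction l0; simpl; auto; rewrite IHl0; ring).
  rewrite Hz, Rminus_0_r in HN. apply Rabs_def2 in HN.
  destruct (nonneg_bounded_summable (fun i => G n i * G n i) (eps/2)) as [_ Hb].
  - intros; nra.
  - intros l Hl. rewrite (sum_list_filter _ (inb l0) l).
    assert (sum_list (fun i => G n i * G n i) (filter (inb l0) l) <= sum_list (fun i => G n i * G n i) l0).
    { apply sum_incl_le; auto; [intros; nra| apply NoDup_filter; auto|].
      intros x hx. apply filter_In in hx. apply inb_spec; tauto. }
    assert (sum_list (fun i => G n i * G n i) (filter (fun x => negb (inb l0 x)) l) <=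
            sum_list (fun i => h i * h i) (filter (fun x => negb (inb l0 x)) l)).
    { apply sum_list_le. intros; apply sq_abs_le; auto. }
    assert (sum_list (fun i => h i * h i) (filter (fun x => negb (inb l0 x)) l) < eps/4).
    { apply Ht; [apply NoDup_filter; auto|]. intros x hx h0. apply filter_In in hx.
      destruct hx as [_ hx]. apply (proj2 (inb_spec l0 x)) in h0. rewrite h0 in hx; discriminate. }
    lra.
  - rewrite Rminus_0_r. rewrite Rabs_right; [unfold S2; lra|].
    apply Rle_ge. apply S2_nonneg. apply (S2_compare _ h); auto.
Qed.

Lemma S2_cont {I} (G : nat -> I -> R) (g : I -> R) :
  ss g -> (forall n, ss (G n)) -> Un_cv (fun n => S2 (fun i => G n i - g i)) 0 ->
  Un_cv (fun n => S2 (G n)) (S2 g).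
Proof.
  intros Hg HG Hc eps He.
  pose proof (S2_nonneg g Hg) as Hg0.
  set (t := eps / (3 * (S2 g + 1))).
  assert (Ht : t > 0) by (unfold t; apply Rdiv_lt_0_compat; lra).
  destruct (Hc (Rmin (eps/3) (t * eps / 3))) as [N HN].
  { apply Rmin_pos; [lra|]. apply Rdiv_lt_0_compat; [nra|lra]. }
  exists N. intros n Hn. specialize (HN n Hn). unfold R_dist in *. rewrite Rminus_0_r in HN.
  set (d := fun i => G n i - g i).
  assert (Hd : ss d) by (apply ss_minus; auto).
  assert (HGn : S2 (G n) = S2 g + 2 * B2 g d + S2 d).
  { rewrite <- S2_plus; auto. unfold S2; apply tsum_ext; intros; unfold d; ring_simplify; auto. }
  pose proof (S2_nonneg d Hd). change (S2 (fun i : I => G n i - g i)) with (S2 d) in HN. rewrite Rabs_right in HN by lra.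
  assert (HB := B2_bound g d t Ht Hg Hd).
  assert (Hm1 : S2 d < eps/3) by (eapply Rlt_le_trans; [apply HN| apply Rmin_l]).
  assert (Hm2 : S2 d < t * eps / 3) by (eapply Rlt_le_trans; [apply HN| apply Rmin_r]).
  assert (Hq : S2 d / t < eps / 3).
  { apply (Rmult_lt_reg_r t); auto. unfold Rdiv. rewrite Rmult_assoc, Rinv_l by lra. nra. }
  assert (Htg : t * S2 g < eps / 3).
  { unfold t. unfold Rdiv. rewrite Rinv_mult. 
    apply Rle_lt_trans with (eps * / 3 * (S2 g * / (S2 g + 1))); [right; ring|].
    assert (S2 g * / (S2 g + 1) < 1). { apply (Rmult_lt_reg_r (S2 g + 1)); [lra|]. rewrite Rmult_assoc, Rinv_l; lra. }
    nra. }
  rewrite HGn. apply Rabs_le_inv in HB. apply Rabs_def1; lra.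
Qed.

Lemma B2_polar {I} (g h : I -> R) : ss g -> ss h ->
  B2 g h = (S2 (fun i => g i + h i) - S2 (fun i => g i - h i)) / 4.
Proof. intros; rewrite S2_plus, S2_minus; auto; field. Qed.

Lemma B2_cont {I} (G H : nat -> I -> R) (g h : I -> R) :
  ss g -> ss h -> (forall n, ss (G n)) -> (forall n, ss (H n)) ->
  Un_cv (fun n => S2 (fun i => G n i - g i)) 0 -> Un_cv (fun n => S2 (fun i => H n i - h i)) 0 ->
  Un_cv (fun n => B2 (G n) (H n)) (B2 g h).
Proof.
  intros Hg Hh HG HH C1 C2.
  rewrite B2_polar by auto.
  apply (Un_cv_ext (fun n => (S2 (fun i => G n i + H n i) - S2 (fun i => G n i - H n i)) / 4)).
  { intros n; rewrite B2_polar; auto. }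
  unfold Rdiv. apply CV_mult; [| intros e He; exists 0%nat; intros; unfold R_dist; rewrite Rminus_diag, Rabs_R0; auto].
  apply CV_minus.
  - apply S2_cont; [apply ss_plus; auto| intros; apply ss_plus; auto|].
    intros e He. destruct (C1 (e/4)) as [N1 h1]; [lra|]. destruct (C2 (e/4)) as [N2 h2]; [lra|].
    exists (max N1 N2). intros n Hn. specialize (h1 n ltac:(lia)). specialize (h2 n ltac:(lia)).
    unfold R_dist in *. rewrite Rminus_0_r in *.
    assert (Ha : ss (fun i => G n i - g i)) by (apply ss_minus; auto).
    assert (Hb : ss (fun i => H n i - h i)) by (apply ss_minus; auto).
    pose proof (S2_plus_le _ _ Ha Hb).
    assert (E : S2 (fun i => G n i + H n i - (g i + h i)) = S2 (fun i => (G n i - g i) + (H n i - h i)))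
      by (unfold S2; apply tsum_ext; intros; ring).
    rewrite E. assert (0 <= S2 (fun i => (G n i - g i) + (H n i - h i))) by (apply S2_nonneg; apply ss_plus; auto).
    pose proof (Rle_abs (S2 (fun i => G n i - g i))). pose proof (Rle_abs (S2 (fun i => H n i - h i))).
    rewrite Rabs_right by lra. lra.
  - apply S2_cont; [apply ss_minus; auto| intros; apply ss_minus; auto|].
    intros e He. destruct (C1 (e/4)) as [N1 h1]; [lra|]. destruct (C2 (e/4)) as [N2 h2]; [lra|].
    exists (max N1 N2). intros n Hn. specialize (h1 n ltac:(lia)). specialize (h2 n ltac:(lia)).
    unfold R_dist in *. rewrite Rminus_0_r in *.
    assert (Ha : ss (fun i => G n i - g i)) by (apply ss_minus; auto).
    assert (Hb : ss (fun i => -1 * (H n i - h i))) by (apply ss_scal, ss_minus; auto).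
    pose proof (S2_plus_le _ _ Ha Hb).
    rewrite S2_scal in H0 by (apply ss_minus; auto).
    assert (E : S2 (fun i => G n i - H n i - (g i - h i)) = S2 (fun i => (G n i - g i) + -1 * (H n i - h i)))
      by (unfold S2; apply tsum_ext; intros; ring).
    rewrite E. assert (0 <= S2 (fun i => (G n i - g i) + -1 * (H n i - h i))) by (apply S2_nonneg; apply ss_plus; auto).
    pose proof (Rle_abs (S2 (fun i => G n i - g i))). pose proof (Rle_abs (S2 (fun i => H n i - h i))).
    rewrite Rabs_right by lra. lra.
Qed.


Lemma ss_ext {I} (g h : I -> R) : (forall i, g i = h i) -> ss g -> ss h.
Proof. intros H. replace h with g; auto. apply functional_extensionality; auto. Qed.
Lemma S2_ext {I} (g h : I -> R) : (forall i, g i = h i) -> S2 g = S2 h.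
Proof. intros H. replace h with g; auto. apply functional_extensionality; auto. Qed.
Lemma B2_ext {I} (g h g' h' : I -> R) : (forall i, g i = g' i) -> (forall i, h i = h' i) -> B2 g h = B2 g' h'.
Proof. intros H H'. replace g' with g; [replace h' with h|]; auto; apply functional_extensionality; auto. Qed.

Lemma ss_sum_iff {A B} (g : A + B -> R) :
  ss g <-> ss (fun a => g (inl a)) /\ ss (fun b => g (inr b)).
Proof. unfold ss. apply (summable_sum_iff (fun i => g i * g i)). intros; nra. Qed.

Lemma S2_sum {A B} (g : A + B -> R) : ss g -> S2 g = S2 (fun a => g (inl a)) + S2 (fun b => g (inr b)).
Proof. intros H. apply ss_sum_iff in H. destruct H. unfold S2. apply (tsum_sum (fun i => g i * g i)); auto. Qed.

Lemma B2_sum {A B} (g h : A + B -> R) : ss g -> ss h ->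
  B2 g h = B2 (fun a => g (inl a)) (fun a => h (inl a)) + B2 (fun b => g (inr b)) (fun b => h (inr b)).
Proof. intros H1 H2. apply ss_sum_iff in H1. apply ss_sum_iff in H2. destruct H1, H2. unfold B2.
  apply (tsum_sum (fun i => g i * h i)); apply ss_prod; auto. Qed.

Lemma S2_single_le {I} (g : I -> R) i : ss g -> g i * g i <= S2 g.
Proof. intros H. apply (tsum_ge_single (fun i => g i * g i)); auto. intros; nra. Qed.

Lemma S2_ext_sq {I} (g h : I -> R) : (forall i, g i * g i = h i * h i) -> S2 g = S2 h.
Proof. intros H; unfold S2; apply tsum_ext; auto. Qed.

Lemma S2_sym_minus {I} (g h : I -> R) : S2 (fun i => g i - h i) = S2 (fun i => h i - g i).
Proof. unfold S2; apply tsum_ext; intros; ring. Qed.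

Definition TW {V} (w : V -> R) (f : V -> R) : V -> R := fun x => sqrt (w x) * f x.
Definition TE {V} (b : V -> V -> R) (f : V -> R) : V * V -> R :=
  fun p => sqrt (b (fst p) (snd p) / 2) * (f (fst p) - f (snd p)).
Definition TQ {V} (b : V -> V -> R) (c : V -> R) (f : V -> R) : V + V * V -> R :=
  fun i => match i with inl x => TW c f x | inr p => TE b f p end.
Definition T {V} (m : V -> R) (b : V -> V -> R) (c : V -> R) (f : V -> R) : V + (V + V * V) -> R :=
  fun i => match i with inl x => TW m f x | inr j => TQ b c f j end.

Definition fminus {V} (f g : V -> R) : V -> R := fun x => f x - g x.
Definition fplus {V} (f g : V -> R) : V -> R := fun x => f x + g x.
Definition fscal {V} (k : R) (f : V -> R) : V -> R := fun x => k * f x.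

Lemma T_minus {V} m b c (f g : V -> R) i : T m b c (fminus f g) i = T m b c f i - T m b c g i.
Proof. destruct i as [x|[x|p]]; unfold T, TQ, TW, TE, fminus; simpl; ring. Qed.
Lemma T_plus {V} m b c (f g : V -> R) i : T m b c (fplus f g) i = T m b c f i + T m b c g i.
Proof. destruct i as [x|[x|p]]; unfold T, TQ, TW, TE, fplus; simpl; ring. Qed.
Lemma T_scal {V} m b c k (f : V -> R) i : T m b c (fscal k f) i = k * T m b c f i.
Proof. destruct i as [x|[x|p]]; unfold T, TQ, TW, TE, fscal; simpl; ring. Qed.
Lemma TQ_minus {V} b c (f g : V -> R) i : TQ b c (fminus f g) i = TQ b c f i - TQ b c g i.
Proof. destruct i as [x|p]; unfold TQ, TW, TE, fminus; simpl; ring. Qed.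
Lemma TQ_plus {V} b c (f g : V -> R) i : TQ b c (fplus f g) i = TQ b c f i + TQ b c g i.
Proof. destruct i as [x|p]; unfold TQ, TW, TE, fplus; simpl; ring. Qed.
Lemma TW_minus {V} w (f g : V -> R) i : TW w (fminus f g) i = TW w f i - TW w g i.
Proof. unfold TW, fminus; ring. Qed.
Lemma TW_plus {V} w (f g : V -> R) i : TW w (fplus f g) i = TW w f i + TW w g i.
Proof. unfold TW, fplus; ring. Qed.

Lemma ss_T_iff {V} m b c (f : V -> R) : ss (T m b c f) <-> ss (TW m f) /\ ss (TQ b c f).
Proof. apply (ss_sum_iff (T m b c f)). Qed.
Lemma S2_T {V} m b c (f : V -> R) : ss (T m b c f) -> S2 (T m b c f) = S2 (TW m f) + S2 (TQ b c f).
Proof. intros H. apply (S2_sum (T m b c f)); auto. Qed.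

Lemma ss_T_minus {V} m b c (f g : V -> R) : ss (T m b c f) -> ss (T m b c g) -> ss (T m b c (fminus f g)).
Proof. intros. apply (ss_ext (fun i => T m b c f i - T m b c g i)); [intros; rewrite T_minus; auto|]. apply ss_minus; auto. Qed.
Lemma ss_T_plus {V} m b c (f g : V -> R) : ss (T m b c f) -> ss (T m b c g) -> ss (T m b c (fplus f g)).
Proof. intros. apply (ss_ext (fun i => T m b c f i + T m b c g i)); [intros; rewrite T_plus; auto|]. apply ss_plus; auto. Qed.
Lemma ss_T_scal {V} m b c k (f : V -> R) : ss (T m b c f) -> ss (T m b c (fscal k f)).
Proof. intros. apply (ss_ext (fun i => k * T m b c f i)); [intros; rewrite T_scal; auto|]. apply ss_scal; auto. Qed.
Lemma ss_TW_minus {V} w (f g : V -> R) : ss (TW w f) -> ss (TW w g) -> ss (TW w (fminus f g)).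
Proof. intros. apply (ss_ext (fun i => TW w f i - TW w g i)); [intros; rewrite TW_minus; auto|]. apply ss_minus; auto. Qed.

Lemma S2_tri {I} (x y z : I -> R) : ss (fun i => x i - y i) -> ss (fun i => y i - z i) ->
  S2 (fun i => x i - z i) <= 2 * S2 (fun i => x i - y i) + 2 * S2 (fun i => y i - z i).
Proof. intros H1 H2. rewrite (S2_ext _ (fun i => (x i - y i) + (y i - z i))) by (intros; ring).
  apply S2_plus_le; auto. Qed.

Lemma T_cv {V} m b c (G : nat -> V -> R) (g : V -> R) :
  (forall x, Un_cv (fun k => G k x) (g x)) -> forall i, Un_cv (fun k => T m b c (G k) i) (T m b c g i).
Proof.
  assert (Hc : forall r, Un_cv (fun _ : nat => r) r).
  { intros r e He; exists 0%nat; intros; unfold R_dist; rewrite Rminus_diag, Rabs_R0; auto. }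
  intros H [x|[x|p]]; unfold T, TQ, TW, TE; simpl; apply CV_mult; auto. apply CV_minus; auto.
Qed.

Lemma pointwise_from_S2 {V} (w : V -> R) (G : nat -> V -> R) :
  (forall x, 0 < w x) -> (forall n, ss (TW w (G n))) -> Un_cv (fun n => S2 (TW w (G n))) 0 ->
  forall x, Un_cv (fun n => G n x) 0.
Proof.
  intros Hw Hs Hc x.
  assert (Hsq : 0 < sqrt (w x)) by (apply sqrt_lt_R0; auto).
  assert (H1 : Un_cv (fun n => TW w (G n) x) 0).
  { intros e He. destruct (Hc (e*e)) as [N HN]; [nra|]. exists N; intros n Hn. specialize (HN n Hn).
    unfold R_dist in *. rewrite Rminus_0_r in *. pose proof (S2_single_le _ x (Hs n)).
    pose proof (Rle_abs (S2 (TW w (G n)))). 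
    assert (Rabs (TW w (G n) x) * Rabs (TW w (G n) x) < e * e) by (rewrite <- sq_abs; lra).
    pose proof (Rabs_pos (TW w (G n) x)). nra. }
  apply (Un_cv_ext (fun n => / sqrt (w x) * TW w (G n) x)).
  { intros n; unfold TW. field. lra. }
  replace 0 with (/ sqrt (w x) * 0) by ring. apply CV_mult; auto.
  intros e He; exists 0%nat; intros; unfold R_dist; rewrite Rminus_diag, Rabs_R0; auto.
Qed.

Definition finsuppR {V} (f : V -> R) : Prop := exists l : list V, forall x, f x <> 0 -> In x l.

Definition RD {V} (m : V -> R) (b : V -> V -> R) (c : V -> R) (f : V -> R) : Prop :=
  ss (TW m f) /\ exists a : nat -> V -> R,
    (forall n, finsuppR (a n) /\ ss (T m b c (a n))) /\
    Un_cv (fun n => S2 (TW m (fminus (a n) f))) 0 /\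
    (forall eps, eps > 0 -> exists N, forall n k, (n >= N)%nat -> (k >= N)%nat ->
        S2 (TQ b c (fminus (a n) (a k))) < eps).

Lemma A_core {V} m b c (f : V -> R) (a : nat -> V -> R) :
  (forall x, 0 < m x) -> ss (TW m f) ->
  (forall n, ss (T m b c (a n))) ->
  Un_cv (fun n => S2 (TW m (fminus (a n) f))) 0 ->
  (forall eps, eps > 0 -> exists N, forall n k, (n >= N)%nat -> (k >= N)%nat ->
        S2 (TQ b c (fminus (a n) (a k))) < eps) ->
  ss (T m b c f) /\ Un_cv (fun n => S2 (T m b c (fminus (a n) f))) 0.
Proof.
  intros Hm Hf Ha Hc HC.
  assert (HaW : forall n, ss (TW m (a n))) by (intros n; apply (proj1 (ss_T_iff m b c (a n)) (Ha n))).
  assert (HdW : forall n, ss (TW m (fminus (a n) f))) by (intros; apply ss_TW_minus; auto).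
  assert (Hpt : forall x, Un_cv (fun n => a n x) (f x)).
  { intros x. pose proof (pointwise_from_S2 m (fun n => fminus (a n) f) Hm HdW Hc x) as H.
    intros e He. destruct (H e He) as [N HN]; exists N; intros n Hn; specialize (HN n Hn).
    unfold R_dist, fminus in *. rewrite Rminus_0_r in HN; auto. }
  assert (HCT : forall eps, eps > 0 -> exists N, forall n k, (n >= N)%nat -> (k >= N)%nat ->
        S2 (T m b c (fminus (a k) (a n))) < eps).
  { intros eps He. destruct (HC (eps/2)) as [N1 H1]; [lra|]. destruct (Hc (eps/8)) as [N2 H2]; [lra|].
    exists (max N1 N2). intros n k Hn Hk.
    assert (Hs : ss (T m b c (fminus (a k) (a n)))) by (apply ss_T_minus; auto).
    rewrite S2_T by auto.
    specialize (H1 k n ltac:(lia) ltac:(lia)).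
    pose proof (H2 k ltac:(lia)) as H2k. pose proof (H2 n ltac:(lia)) as H2n. unfold R_dist in *. rewrite Rminus_0_r in *.
    assert (S2 (TW m (fminus (a k) (a n))) <= 2 * S2 (TW m (fminus (a k) f)) + 2 * S2 (TW m (fminus (a n) f))).
    { rewrite (S2_ext _ (fun i => TW m (a k) i - TW m (a n) i)) by (intros; apply TW_minus).
      eapply Rle_trans; [apply (S2_tri _ (TW m f))|].
      - apply (ss_ext (TW m (fminus (a k) f))); [intros; apply TW_minus| auto].
      - apply (ss_ext (TW m (fminus f (a n)))); [intros; apply TW_minus| apply ss_TW_minus; auto].
      - rewrite (S2_ext (fun i => TW m (a k) i - TW m f i) (TW m (fminus (a k) f))) by (intros; symmetry; apply TW_minus).
        rewrite (S2_sym_minus (TW m f)).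
        rewrite (S2_ext (fun i => TW m (a n) i - TW m f i) (TW m (fminus (a n) f))) by (intros; symmetry; apply TW_minus).
        lra. }
    pose proof (Rle_abs (S2 (TW m (fminus (a k) f)))). pose proof (Rle_abs (S2 (TW m (fminus (a n) f)))). lra. }
  assert (Hfat : forall eps, eps > 0 -> exists N, forall n, (n >= N)%nat ->
      ss (T m b c (fminus f (a n))) /\ S2 (T m b c (fminus f (a n))) <= eps).
  { intros eps He. destruct (HCT eps He) as [N HN]. exists N. intros n Hn.
    apply (fatou (fun k => T m b c (fminus (a k) (a n))) _ N eps).
    - apply T_cv. intros x. unfold fminus. apply CV_minus; auto.
      intros e h; exists 0%nat; intros; unfold R_dist; rewrite Rminus_diag, Rabs_R0; auto.
    - intros k Hk. split; [apply ss_T_minus; auto| left; apply HN; auto]. }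
  destruct (Hfat 1 ltac:(lra)) as [N0 HN0]. destruct (HN0 N0 (le_n _)) as [Hs0 _].
  assert (HTf : ss (T m b c f)).
  { apply (ss_ext (T m b c (fplus (fminus f (a N0)) (a N0)))). intros i; unfold T, TQ, TW, TE, fplus, fminus.
    destruct i as [x|[x|p]]; simpl; ring. apply ss_T_plus; auto. }
  split; auto.
  intros eps He. destruct (Hfat (eps/2) ltac:(lra)) as [N HN]. exists N. intros n Hn.
  destruct (HN n Hn) as [H1 H2]. unfold R_dist. rewrite Rminus_0_r.
  rewrite (S2_ext_sq _ (T m b c (fminus f (a n)))) by (intros i; rewrite !T_minus; ring).
  rewrite Rabs_right; [lra| apply Rle_ge, S2_nonneg; auto].
Qed.


Definition cRe {V} (u : V -> Defs.C) : V -> R := fun x => fst (u x).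
Definition cIm {V} (u : V -> Defs.C) : V -> R := fun x => snd (u x).

Lemma TW_prod {V} (w f g : V -> R) x : 0 <= w x -> TW w f x * TW w g x = w x * (f x * g x).
Proof. intros H. unfold TW. replace (sqrt (w x) * f x * (sqrt (w x) * g x)) with ((sqrt (w x) * sqrt (w x)) * (f x * g x)) by ring.
  rewrite sqrt_sqrt; auto. Qed.

Lemma TE_prod {V} (b : V -> V -> R) f g p : 0 <= b (fst p) (snd p) ->
  TE b f p * TE b g p = b (fst p) (snd p) / 2 * ((f (fst p) - f (snd p)) * (g (fst p) - g (snd p))).
Proof. intros H. unfold TE.
  match goal with |- ?s * ?A * (?s' * ?B) = _ => replace (s * A * (s' * B)) with ((s * s') * (A * B)) by ring end.
  rewrite sqrt_sqrt; [auto|lra]. Qed.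

Lemma sum2_iff {I} (F g h : I -> R) k : k > 0 -> (forall i, F i = k * (g i * g i + h i * h i)) ->
  (summable F <-> ss g /\ ss h).
Proof.
  intros Hk H. split.
  - intros HF. split.
    + apply (summable_compare _ (fun i => /k * F i)); [|apply summable_scal; auto].
      intros i; rewrite H. split; [nra|]. replace (/ k * (k * (g i * g i + h i * h i))) with (g i * g i + h i * h i) by (field; lra). nra.
    + apply (summable_compare _ (fun i => /k * F i)); [|apply summable_scal; auto].
      intros i; rewrite H. split; [nra|]. replace (/ k * (k * (g i * g i + h i * h i))) with (g i * g i + h i * h i) by (field; lra). nra.
  - intros [H1 H2]. apply (summable_ext (fun i => k * (g i * g i + h i * h i))); [intros; auto|].
    apply summable_scal, summable_plus; auto.
Qed.

Lemma sum2_tsum {I} (F g h : I -> R) k : (forall i, F i = k * (g i * g i + h i * h i)) -> ss g -> ss h ->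
  tsum F = k * (S2 g + S2 h).
Proof. intros H H1 H2. rewrite (tsum_ext _ (fun i => k * (g i * g i + h i * h i))) by auto.
  rewrite tsum_scal, tsum_plus; auto. apply summable_plus; auto. Qed.

Lemma l2_iff {V} (m : V -> R) (u : V -> Defs.C) : (forall x, 0 <= m x) ->
  (l2 m u <-> ss (TW m (cRe u)) /\ ss (TW m (cIm u))).
Proof. intros Hm. apply (sum2_iff _ _ _ 1); [lra|]. intros x. rewrite !TW_prod by auto.
  unfold Cnorm2, cRe, cIm. ring. Qed.

Lemma l2norm2_eq {V} (m : V -> R) (u : V -> Defs.C) : (forall x, 0 <= m x) -> l2 m u ->
  l2norm2 m u = S2 (TW m (cRe u)) + S2 (TW m (cIm u)).
Proof. intros Hm H. apply l2_iff in H; auto. destruct H. unfold l2norm2.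
  rewrite (sum2_tsum _ (TW m (cRe u)) (TW m (cIm u)) 1); auto; [ring|].
  intros x. rewrite !TW_prod by auto. unfold Cnorm2, cRe, cIm. ring. Qed.

Lemma QN_dom_iff {V} (m : V -> R) b c (u : V -> Defs.C) :
  (forall x, 0 <= m x) -> (forall x y, 0 <= b x y) -> (forall x, 0 <= c x) ->
  (QN_dom m b c u <-> ss (T m b c (cRe u)) /\ ss (T m b c (cIm u))).
Proof.
  intros Hm Hb Hc. unfold QN_dom. rewrite l2_iff by auto.
  rewrite !ss_T_iff. unfold TQ. rewrite !(ss_sum_iff (fun i => match i with inl x => _ | inr p => _ end)).
  assert (E1 : summable (fun p : V * V => b (fst p) (snd p) * Cnorm2 (Csub (u (fst p)) (u (snd p))))
     <-> ss (TE b (cRe u)) /\ ss (TE b (cIm u))).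
  { apply (sum2_iff _ _ _ 2); [lra|]. intros p. rewrite !TE_prod by auto. unfold Cnorm2, Csub, cRe, cIm; simpl. field. }
  assert (E2 : summable (fun x => c x * Cnorm2 (u x)) <-> ss (TW c (cRe u)) /\ ss (TW c (cIm u))).
  { apply (sum2_iff _ _ _ 1); [lra|]. intros x. rewrite !TW_prod by auto. unfold Cnorm2, cRe, cIm; simpl. ring. }
  rewrite E1, E2. simpl. tauto.
Qed.

Lemma tsum_pair_B2 {V} (b : V -> V -> R) f g : (forall x y, 0 <= b x y) -> ss (TE b f) -> ss (TE b g) ->
  summable (fun p : V * V => b (fst p) (snd p) * ((f (fst p) - f (snd p)) * (g (fst p) - g (snd p)))) /\
  tsum (fun p : V * V => b (fst p) (snd p) * ((f (fst p) - f (snd p)) * (g (fst p) - g (snd p)))) = 2 * B2 (TE b f) (TE b g).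
Proof.
  intros Hb H1 H2. assert (E : forall p : V * V, b (fst p) (snd p) * ((f (fst p) - f (snd p)) * (g (fst p) - g (snd p)))
     = 2 * (TE b f p * TE b g p)) by (intros; rewrite TE_prod by auto; field).
  split. - apply (summable_ext (fun p => 2 * (TE b f p * TE b g p))); [intros; auto|]. apply summable_scal, ss_prod; auto.
  - rewrite (tsum_ext _ _ E). unfold B2. apply tsum_scal, ss_prod; auto.
Qed.

Lemma tsum_c_B2 {V} (c : V -> R) f g : (forall x, 0 <= c x) -> ss (TW c f) -> ss (TW c g) ->
  summable (fun x => c x * (f x * g x)) /\ tsum (fun x => c x * (f x * g x)) = B2 (TW c f) (TW c g).
Proof.
  intros Hc H1 H2. assert (E : forall x, c x * (f x * g x) = TW c f x * TW c g x) by (intros; rewrite TW_prod; auto).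
  split. - apply (summable_ext (fun x => TW c f x * TW c g x)); [intros; auto|]. apply ss_prod; auto.
  - rewrite (tsum_ext _ _ E). reflexivity.
Qed.

Lemma B2_TQ {V} b c (f g : V -> R) : ss (TQ b c f) -> ss (TQ b c g) ->
  B2 (TQ b c f) (TQ b c g) = B2 (TW c f) (TW c g) + B2 (TE b f) (TE b g).
Proof. intros H1 H2. apply (B2_sum (TQ b c f) (TQ b c g)); auto. Qed.

Lemma B2_sym {I} (g h : I -> R) : B2 g h = B2 h g.
Proof. unfold B2; apply tsum_ext; intros; ring. Qed.

Lemma QN_val_formula {V} (m : V -> R) b c (u v : V -> Defs.C) :
  (forall x y, 0 <= b x y) -> (forall x, 0 <= c x) ->
  ss (TQ b c (cRe u)) -> ss (TQ b c (cIm u)) -> ss (TQ b c (cRe v)) -> ss (TQ b c (cIm v)) ->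
  QN_val b c u v = (B2 (TQ b c (cRe u)) (TQ b c (cRe v)) + B2 (TQ b c (cIm u)) (TQ b c (cIm v)),
                    B2 (TQ b c (cIm u)) (TQ b c (cRe v)) - B2 (TQ b c (cRe u)) (TQ b c (cIm v))).
Proof.
  intros Hb Hc H1 H2 H3 H4.
  pose proof (proj1 (ss_sum_iff _) H1) as [W1 E1]. pose proof (proj1 (ss_sum_iff _) H2) as [W2 E2].
  pose proof (proj1 (ss_sum_iff _) H3) as [W3 E3]. pose proof (proj1 (ss_sum_iff _) H4) as [W4 E4].
  simpl in *. change (ss (TW c (cRe u))) in W1. change (ss (TW c (cIm u))) in W2.
  change (ss (TW c (cRe v))) in W3. change (ss (TW c (cIm v))) in W4.
  change (ss (TE b (cRe u))) in E1. change (ss (TE b (cIm u))) in E2.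
  change (ss (TE b (cRe v))) in E3. change (ss (TE b (cIm v))) in E4.
  rewrite !B2_TQ by auto.
  destruct (tsum_pair_B2 b _ _ Hb E1 E3) as [S13 T13].
  destruct (tsum_pair_B2 b _ _ Hb E2 E4) as [S24 T24].
  destruct (tsum_pair_B2 b _ _ Hb E2 E3) as [S23 T23].
  destruct (tsum_pair_B2 b _ _ Hb E1 E4) as [S14 T14].
  destruct (tsum_c_B2 c _ _ Hc W1 W3) as [C13 U13].
  destruct (tsum_c_B2 c _ _ Hc W2 W4) as [C24 U24].
  destruct (tsum_c_B2 c _ _ Hc W2 W3) as [C23 U23].
  destruct (tsum_c_B2 c _ _ Hc W1 W4) as [C14 U14].
  unfold QN_val, Cadd, Cscal, tsumC; simpl. f_equal.
  - rewrite (tsum_ext _ (fun p : V * V => b (fst p) (snd p) * ((cRe u (fst p) - cRe u (snd p)) * (cRe v (fst p) - cRe v (snd p)))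
        + b (fst p) (snd p) * ((cIm u (fst p) - cIm u (snd p)) * (cIm v (fst p) - cIm v (snd p)))))
      by (intros; unfold cRe, cIm; simpl; ring).
    rewrite (tsum_ext (fun x => c x * _) (fun x => c x * (cRe u x * cRe v x) + c x * (cIm u x * cIm v x)))
      by (intros; unfold cRe, cIm; simpl; ring).
    rewrite !tsum_plus by auto. rewrite T13, T24, U13, U24. field.
  - rewrite (tsum_ext _ (fun p : V * V => b (fst p) (snd p) * ((cIm u (fst p) - cIm u (snd p)) * (cRe v (fst p) - cRe v (snd p)))
        - b (fst p) (snd p) * ((cRe u (fst p) - cRe u (snd p)) * (cIm v (fst p) - cIm v (snd p)))))
      by (intros; unfold cRe, cIm; simpl; ring).
    rewrite (tsum_ext (fun x => c x * _) (fun x => c x * (cIm u x * cRe v x) - c x * (cRe u x * cIm v x)))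
      by (intros; unfold cRe, cIm; simpl; ring).
    rewrite !tsum_minus by auto. rewrite T23, T14, U23, U14. field.
Qed.


Lemma W_formula {V} (m : V -> R) b c (w : V -> Defs.C) :
  (forall x y, 0 <= b x y) -> (forall x, 0 <= c x) ->
  ss (TQ b c (cRe w)) -> ss (TQ b c (cIm w)) ->
  QN_val b c w w = (S2 (TQ b c (cRe w)) + S2 (TQ b c (cIm w)), 0).
Proof. intros Hb Hc H1 H2. rewrite (QN_val_formula m) by auto. f_equal.
  rewrite (B2_sym (TQ b c (cIm w))). ring. Qed.

Lemma ssTQ_of_T {V} m b c (f : V -> R) : ss (T m b c f) -> ss (TQ b c f).
Proof. intros H; apply ss_T_iff in H; tauto. Qed.
Lemma ssTW_of_T {V} m b c (f : V -> R) : ss (T m b c f) -> ss (TW m f).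
Proof. intros H; apply ss_T_iff in H; tauto. Qed.

Lemma approx_part {V} (m : V -> R) b c pr un (u : V -> Defs.C) :
  (forall x, 0 < m x) -> (forall x y, 0 <= b x y) -> (forall x, 0 <= c x) ->
  (pr = fst \/ pr = snd) ->
  l2 m u -> approx m (restrict_Cc (QN m b c)) un u ->
  ss (TW m (fun x => pr (u x))) /\
  (forall n, finsuppR (fun x => pr (un n x)) /\ ss (T m b c (fun x => pr (un n x)))) /\
  Un_cv (fun n => S2 (TW m (fminus (fun x => pr (un n x)) (fun x => pr (u x))))) 0 /\
  (forall eps, eps > 0 -> exists N, forall n k, (n >= N)%nat -> (k >= N)%nat ->
        S2 (TQ b c (fminus (fun x => pr (un n x)) (fun x => pr (un k x)))) < eps).
Proof.
  intros Hm Hb Hc Hpr Hu [Hd [Hl [Hcv HC]]].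
  assert (Hm0 : forall x, 0 <= m x) by (intros x; specialize (Hm x); lra).
  assert (F3 : forall z, pr z <> 0 -> z <> C0).
  { intros z h e; subst z; destruct Hpr; subst; simpl in h; lra. }
  assert (F4 : forall w, QN_dom m b c w -> ss (T m b c (fun x => pr (w x)))).
  { intros w h. apply QN_dom_iff in h; auto. destruct Hpr; subst; tauto. }
  assert (F5 : forall w, QN_dom m b c w -> 0 <= S2 (TQ b c (fun x => pr (w x))) <= fst (QN_val b c w w) /\ snd (QN_val b c w w) = 0).
  { intros w h. apply QN_dom_iff in h; auto. destruct h as [h1 h2].
    apply ssTQ_of_T in h1. apply ssTQ_of_T in h2.
    rewrite (W_formula m) by auto. simpl. pose proof (S2_nonneg _ h1). pose proof (S2_nonneg _ h2).
    destruct Hpr; subst; unfold cRe, cIm in *; split; auto; lra. }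
  assert (F6 : forall w, l2 m w -> S2 (TW m (fun x => pr (w x))) <= l2norm2 m w).
  { intros w h. rewrite l2norm2_eq by auto. apply l2_iff in h; auto. destruct h as [h1 h2].
    pose proof (S2_nonneg _ h1). pose proof (S2_nonneg _ h2). destruct Hpr; subst; unfold cRe, cIm in *; lra. }
  assert (F2 : forall z w, pr (Csub z w) = pr z - pr w) by (intros; destruct Hpr; subst; reflexivity).
  assert (F7 : forall w, l2 m w -> ss (TW m (fun x => pr (w x)))).
  { intros w h. apply l2_iff in h; auto. destruct Hpr; subst; tauto. }
  split; [apply F7; auto|]. split; [|split].
  - intros n. destruct (Hd n) as [[l Hfl] HQ]. split; [|apply F4; auto].
    exists l. intros x h. apply Hfl. apply F3; auto.
  - intros e He. destruct (Hcv e He) as [N HN]. exists N. intros n Hn. specialize (HN n Hn).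
    unfold R_dist in *. rewrite Rminus_0_r in *.
    pose proof (F6 _ (Hl n)) as h.
    rewrite (S2_ext _ (TW m (fminus (fun x => pr (un n x)) (fun x => pr (u x))))) in h
      by (intros; unfold TW, fminus, fsub; rewrite F2; auto).
    assert (Hs0 : ss (TW m (fminus (fun x => pr (un n x)) (fun x => pr (u x))))).
    { apply (ss_ext (TW m (fun x => pr (fsub (un n) u x)))); [intros; unfold TW, fminus, fsub; rewrite F2; auto| apply F7; auto]. }
    pose proof (S2_nonneg _ Hs0) as h0.
    pose proof (Rle_abs (l2norm2 m (fsub (un n) u))).
    rewrite Rabs_right by (apply Rle_ge; auto). lra.
  - intros e He. destruct (HC (e*e)) as [N HN]; [nra|]. exists N. intros n k Hn Hk. specialize (HN n k Hn Hk).
    simpl in HN.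
    assert (Hdom : QN_dom m b c (fsub (un n) (un k))).
    { destruct (Hd n) as [_ h1], (Hd k) as [_ h2]. simpl in h1, h2. apply QN_dom_iff in h1; auto. apply QN_dom_iff in h2; auto.
      apply QN_dom_iff; auto. destruct h1, h2. split; apply ss_T_minus; auto. }
    destruct (F5 _ Hdom) as [[h0 h1] h2].
    rewrite (S2_ext _ (TQ b c (fun x => pr (fsub (un n) (un k) x)))) by
      (intros [x|p]; unfold TQ, TW, TE, fminus, fsub; rewrite ?F2; auto).
    unfold Cnorm2 in HN. rewrite h2 in HN.
    destruct (Rlt_le_dec (fst (QN_val b c (fsub (un n) (un k)) (fsub (un n) (un k)))) e); [lra|]. nra.
Qed.

Lemma QD_to_RD {V} (m : V -> R) b c (u : V -> Defs.C) :
  (forall x, 0 < m x) -> (forall x y, 0 <= b x y) -> (forall x, 0 <= c x) ->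
  fdom (QD m b c) u -> RD m b c (cRe u) /\ RD m b c (cIm u).
Proof.
  intros Hm Hb Hc [Hl [un Ha]]. split.
  - destruct (approx_part m b c fst un u Hm Hb Hc (or_introl eq_refl) Hl Ha) as [h1 [h2 [h3 h4]]].
    split; auto. exists (fun n x => fst (un n x)). auto.
  - destruct (approx_part m b c snd un u Hm Hb Hc (or_intror eq_refl) Hl Ha) as [h1 [h2 [h3 h4]]].
    split; auto. exists (fun n x => snd (un n x)). auto.
Qed.

Lemma QD_sub_dom {V} (m : V -> R) b c (u : V -> Defs.C) :
  (forall x, 0 < m x) -> (forall x y, 0 <= b x y) -> (forall x, 0 <= c x) ->
  fdom (QD m b c) u -> QN_dom m b c u.
Proof.
  intros Hm Hb Hc H. assert (Hm0 : forall x, 0 <= m x) by (intros x; specialize (Hm x); lra).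
  destruct (QD_to_RD m b c u Hm Hb Hc H) as [[h1 [a [h2 [h3 h4]]]] [k1 [a' [k2 [k3 k4]]]]].
  apply QN_dom_iff; auto. split.
  - apply (A_core m b c _ a); auto. intros; apply h2.
  - apply (A_core m b c _ a'); auto. intros; apply k2.
Qed.

Lemma approx_conv {V} (m : V -> R) b c pr un (u : V -> Defs.C) :
  (forall x, 0 < m x) -> (forall x y, 0 <= b x y) -> (forall x, 0 <= c x) ->
  (pr = fst \/ pr = snd) ->
  l2 m u -> approx m (restrict_Cc (QN m b c)) un u ->
  Un_cv (fun n => S2 (TQ b c (fminus (fun x => pr (un n x)) (fun x => pr (u x))))) 0.
Proof.
  intros Hm Hb Hc Hpr Hl Ha.
  destruct (approx_part m b c pr un u Hm Hb Hc Hpr Hl Ha) as [h1 [h2 [h3 h4]]].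
  destruct (A_core m b c _ (fun n x => pr (un n x)) Hm h1 (fun n => proj2 (h2 n)) h3 h4) as [Hs Hcv].
  intros e He. destruct (Hcv e He) as [N HN]. exists N. intros n Hn. specialize (HN n Hn).
  unfold R_dist in *. rewrite Rminus_0_r in *.
  assert (Hd : ss (T m b c (fminus (fun x => pr (un n x)) (fun x => pr (u x))))) by (apply ss_T_minus; auto; apply h2).
  rewrite S2_T in HN by auto. apply ss_T_iff in Hd. destruct Hd as [d1 d2].
  pose proof (S2_nonneg _ d1). pose proof (S2_nonneg _ d2).
  rewrite Rabs_right in * by (apply Rle_ge; lra). lra.
Qed.

Lemma cv_C_unique (w : nat -> Defs.C) z z' :
  Un_cv (fun n => Cnorm2 (Csub (w n) z)) 0 -> Un_cv (fun n => Cnorm2 (Csub (w n) z')) 0 -> z = z'.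
Proof.
  intros H1 H2. destruct z as [z1 z2], z' as [y1 y2].
  set (D := (z1 - y1) * (z1 - y1) + (z2 - y2) * (z2 - y2)).
  assert (HD : D <= 0).
  { destruct (Rle_lt_dec D 0) as [|HD]; auto. exfalso.
    destruct (H1 (D/4)) as [N1 h1]; [lra|]. destruct (H2 (D/4)) as [N2 h2]; [lra|].
    specialize (h1 (max N1 N2) ltac:(lia)). specialize (h2 (max N1 N2) ltac:(lia)).
    unfold R_dist, Cnorm2, Csub in *; simpl in *. rewrite Rminus_0_r in *.
    destruct (w (max N1 N2)) as [w1 w2]; simpl in *.
    pose proof (Rle_abs ((w1 - z1) * (w1 - z1) + (w2 - z2) * (w2 - z2))).
    pose proof (Rle_abs ((w1 - y1) * (w1 - y1) + (w2 - y2) * (w2 - y2))).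
    pose proof (Rle_0_sqr (2*w1 - z1 - y1)). pose proof (Rle_0_sqr (2*w2 - z2 - y2)). unfold Rsqr in *. unfold D in *. nra. }
  unfold D in HD. pose proof (Rle_0_sqr (z1 - y1)). pose proof (Rle_0_sqr (z2 - y2)). unfold Rsqr in *.
  f_equal; apply Rminus_diag_uniq; apply Rsqr_0_uniq; unfold Rsqr; lra.
Qed.

Lemma Cnorm2_cv (q : nat -> Defs.C) z : Un_cv (fun n => fst (q n)) (fst z) -> Un_cv (fun n => snd (q n)) (snd z) ->
  Un_cv (fun n => Cnorm2 (Csub (q n) z)) 0.
Proof.
  intros H1 H2. unfold Cnorm2, Csub; simpl. replace 0 with ((fst z - fst z) * (fst z - fst z) + (snd z - snd z) * (snd z - snd z)) by ring.
  assert (Hc : forall r, Un_cv (fun _ : nat => r) r).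
  { intros r e He; exists 0%nat; intros; unfold R_dist; rewrite Rminus_diag, Rabs_R0; auto. }
  apply CV_plus; apply CV_mult; apply CV_minus; auto.
Qed.

Lemma QD_val {V} (m : V -> R) b c (u v : V -> Defs.C) :
  (forall x, 0 < m x) -> (forall x y, 0 <= b x y) -> (forall x, 0 <= c x) ->
  fdom (QD m b c) u -> fdom (QD m b c) v -> fval (QD m b c) u v = QN_val b c u v.
Proof.
  intros Hm Hb Hc Hu Hv.
  assert (Hm0 : forall x, 0 <= m x) by (intros x; specialize (Hm x); lra).
  pose proof (QD_sub_dom m b c u Hm Hb Hc Hu) as Nu. pose proof (QD_sub_dom m b c v Hm Hb Hc Hv) as Nv.
  apply QN_dom_iff in Nu; auto. apply QN_dom_iff in Nv; auto.
  destruct Nu as [Nu1 Nu2], Nv as [Nv1 Nv2].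
  set (P := fun z => forall un vn, approx m (restrict_Cc (QN m b c)) un u -> approx m (restrict_Cc (QN m b c)) vn v ->
         Un_cv (fun n => Cnorm2 (Csub (fval (restrict_Cc (QN m b c)) (un n) (vn n)) z)) 0).
  assert (HP : P (QN_val b c u v)).
  { intros un vn Hau Hav. simpl.
    pose proof (approx_conv m b c fst un u Hm Hb Hc (or_introl eq_refl) (proj1 Hu) Hau) as C1.
    pose proof (approx_conv m b c snd un u Hm Hb Hc (or_intror eq_refl) (proj1 Hu) Hau) as C2.
    pose proof (approx_conv m b c fst vn v Hm Hb Hc (or_introl eq_refl) (proj1 Hv) Hav) as C3.
    pose proof (approx_conv m b c snd vn v Hm Hb Hc (or_intror eq_refl) (proj1 Hv) Hav) as C4.
    destruct Hau as [Du _], Hav as [Dv _].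
    assert (Su : forall n, ss (T m b c (cRe (un n))) /\ ss (T m b c (cIm (un n)))).
    { intros n; apply QN_dom_iff; auto. apply (Du n). }
    assert (Sv : forall n, ss (T m b c (cRe (vn n))) /\ ss (T m b c (cIm (vn n)))).
    { intros n; apply QN_dom_iff; auto. apply (Dv n). }
    assert (E : forall pr (w : nat -> V -> Defs.C) (z : V -> Defs.C),
       Un_cv (fun n => S2 (TQ b c (fminus (fun x => pr (w n x)) (fun x => pr (z x))))) 0 ->
       Un_cv (fun n => S2 (fun i => TQ b c (fun x => pr (w n x)) i - TQ b c (fun x => pr (z x)) i)) 0).
    { intros pr w z h. eapply Un_cv_ext; [|apply h]. intros n; apply S2_ext; intros; apply TQ_minus. }
    apply E in C1, C2, C3, C4.
    Ltac solve_ss m Su Sv := apply (ssTQ_of_T m); first [exact (proj1 (Su _)) | exact (proj2 (Su _)) | exact (proj1 (Sv _)) | exact (proj2 (Sv _)) | assumption].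
    apply Cnorm2_cv.
    - apply (Un_cv_ext (fun n => B2 (TQ b c (cRe (un n))) (TQ b c (cRe (vn n))) + B2 (TQ b c (cIm (un n))) (TQ b c (cIm (vn n))))).
      { intros n. rewrite (QN_val_formula m) by (auto; solve_ss m Su Sv). reflexivity. }
      rewrite (QN_val_formula m) by (auto; solve_ss m Su Sv). simpl.
      apply CV_plus; apply B2_cont; first [exact C1|exact C2|exact C3|exact C4|(intros k; solve_ss m Su Sv)|solve_ss m Su Sv].
    - apply (Un_cv_ext (fun n => B2 (TQ b c (cIm (un n))) (TQ b c (cRe (vn n))) - B2 (TQ b c (cRe (un n))) (TQ b c (cIm (vn n))))).
      { intros n. rewrite (QN_val_formula m) by (auto; solve_ss m Su Sv). reflexivity. }
      rewrite (QN_val_formula m) by (auto; solve_ss m Su Sv). simpl.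
      apply CV_minus; apply B2_cont; first [exact C1|exact C2|exact C3|exact C4|(intros k; solve_ss m Su Sv)|solve_ss m Su Sv]. }
  simpl. fold (restrict_Cc (QN m b c)). change (epsilon (inhabits C0) P = QN_val b c u v).
  assert (HP' : P (epsilon (inhabits C0) P)) by (apply epsilon_spec; exists (QN_val b c u v); auto).
  destruct Hu as [_ [un Hau]], Hv as [_ [vn Hav]].
  apply (cv_C_unique (fun n => fval (restrict_Cc (QN m b c)) (un n) (vn n))); [apply HP'|apply HP]; auto.
Qed.


Lemma notfe_exists {V} (m : V -> R) b c :
  (forall x, 0 < m x) -> (forall x y, 0 <= b x y) -> (forall x, 0 <= c x) ->
  ~ form_eq (QN m b c) (QD m b c) -> exists u, QN_dom m b c u /\ ~ fdom (QD m b c) u.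
Proof.
  intros Hm Hb Hc Hne. destruct (classic (exists u, QN_dom m b c u /\ ~ fdom (QD m b c) u)) as [|Hno]; auto.
  exfalso. apply Hne.
  assert (Hin : forall u, QN_dom m b c u -> fdom (QD m b c) u).
  { intros u h. destruct (classic (fdom (QD m b c) u)); auto. exfalso; apply Hno; eauto. }
  split.
  - intros u; split; intro h; [apply Hin; auto| apply (QD_sub_dom m b c u Hm Hb Hc h)].
  - intros u v hu hv. simpl in *. symmetry. apply QD_val; auto; apply Hin; auto.
Qed.

Lemma S2_zero {I} (g : I -> R) : (forall i, g i = 0) -> ss g /\ S2 g = 0.
Proof.
  intros H. assert (Hs : has_sum (fun i => g i * g i) 0).
  { intros e He. exists []. intros l _ _. replace (sum_list (fun i => g i * g i) l) with 0.
    rewrite Rminus_0_r, Rabs_R0; auto. induction l; simpl; auto. rewrite H, <- IHl; ring. }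
  split; [exists 0; auto| apply tsum_eq; auto].
Qed.

Lemma S2_TW_le {V} m b c (f : V -> R) : ss (T m b c f) -> S2 (TW m f) <= S2 (T m b c f).
Proof. intros H. rewrite S2_T by auto. apply ss_T_iff in H. destruct H. pose proof (S2_nonneg _ H0). lra. Qed.
Lemma S2_TQ_le {V} m b c (f : V -> R) : ss (T m b c f) -> S2 (TQ b c f) <= S2 (T m b c f).
Proof. intros H. rewrite S2_T by auto. apply ss_T_iff in H. destruct H. pose proof (S2_nonneg _ H). lra. Qed.

Lemma cv_squeeze0 (u v : nat -> R) : (forall n, 0 <= u n <= v n) -> Un_cv v 0 -> Un_cv u 0.
Proof. intros H Hv e He. destruct (Hv e He) as [N HN]; exists N; intros n Hn; specialize (HN n Hn); specialize (H n).
  unfold R_dist in *. rewrite Rminus_0_r in *. rewrite Rabs_right in * by lra. lra. Qed.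

Lemma RD_to_QD {V} (m : V -> R) b c (f g : V -> R) :
  (forall x, 0 < m x) -> (forall x y, 0 <= b x y) -> (forall x, 0 <= c x) ->
  RD m b c f -> RD m b c g -> fdom (QD m b c) (fun x => (f x, g x)).
Proof.
  intros Hm Hb Hc [Hf [a [Ha1 [Ha2 Ha3]]]] [Hg [a' [Hb1 [Hb2 Hb3]]]].
  assert (Hm0 : forall x, 0 <= m x) by (intros x; specialize (Hm x); lra).
  split; [apply l2_iff; auto|].
  exists (fun n x => (a n x, a' n x)). split; [|split; [|split]].
  - intros n. destruct (Ha1 n) as [[l1 H1] S1], (Hb1 n) as [[l2 H2] S2'].
    split.
    + exists (l1 ++ l2). intros x hx. apply in_or_app.
      destruct (Req_dec (a n x) 0) as [e1|e1]; [|left; auto].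
      destruct (Req_dec (a' n x) 0) as [e2|e2]; [|right; auto].
      exfalso; apply hx. unfold C0; rewrite e1, e2; auto.
    + simpl. apply QN_dom_iff; auto.
  - intros n. apply l2_iff; auto. split.
    + apply ss_TW_minus; [apply ssTW_of_T with (b:=b) (c:=c); apply Ha1| auto].
    + apply ss_TW_minus; [apply ssTW_of_T with (b:=b) (c:=c); apply Hb1| auto].
  - apply (Un_cv_ext (fun n => S2 (TW m (fminus (a n) f)) + S2 (TW m (fminus (a' n) g)))).
    { intros n. rewrite l2norm2_eq; auto. apply l2_iff; auto. split.
      + apply ss_TW_minus; [apply ssTW_of_T with (b:=b) (c:=c); apply Ha1| auto].
      + apply ss_TW_minus; [apply ssTW_of_T with (b:=b) (c:=c); apply Hb1| auto]. }
    replace 0 with (0 + 0) by ring. apply CV_plus; auto.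
  - intros eps He.
    assert (Hs : 0 < sqrt eps) by (apply sqrt_lt_R0; lra).
    destruct (Ha3 (sqrt eps / 2)) as [N1 H1]; [lra|]. destruct (Hb3 (sqrt eps / 2)) as [N2 H2]; [lra|].
    exists (max N1 N2). intros n k Hn Hk. simpl.
    assert (Hd1 : ss (T m b c (fminus (a n) (a k)))) by (apply ss_T_minus; [apply Ha1|apply Ha1]).
    assert (Hd2 : ss (T m b c (fminus (a' n) (a' k)))) by (apply ss_T_minus; [apply Hb1|apply Hb1]).
    rewrite (W_formula m) by (auto; apply (ssTQ_of_T m); auto).
    specialize (H1 n k ltac:(lia) ltac:(lia)). specialize (H2 n k ltac:(lia) ltac:(lia)).
    pose proof (S2_nonneg _ (ssTQ_of_T _ _ _ _ Hd1)). pose proof (S2_nonneg _ (ssTQ_of_T _ _ _ _ Hd2)).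
    change (S2 (TQ b c (cRe (fsub (fun x => (a n x, a' n x)) (fun x => (a k x, a' k x))))))
      with (S2 (TQ b c (fminus (a n) (a k)))).
    change (S2 (TQ b c (cIm (fsub (fun x => (a n x, a' n x)) (fun x => (a k x, a' k x))))))
      with (S2 (TQ b c (fminus (a' n) (a' k)))).
    unfold Cnorm2; simpl.
    pose proof (sqrt_sqrt eps ltac:(lra)). nra.
Qed.

Lemma RD_ext {V} m b c (f g : V -> R) : (forall x, f x = g x) -> RD m b c f -> RD m b c g.
Proof. intros H. replace g with f; auto. apply functional_extensionality; auto. Qed.

Lemma RD_minus {V} (m : V -> R) b c (f g : V -> R) :
  RD m b c f -> RD m b c g -> RD m b c (fminus f g).
Proof.
  intros [Hf [a [Ha1 [Ha2 Ha3]]]] [Hg [a' [Hb1 [Hb2 Hb3]]]].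
  split; [apply ss_TW_minus; auto|].
  exists (fun n => fminus (a n) (a' n)). split; [|split].
  - intros n. destruct (Ha1 n) as [[l1 H1] S1], (Hb1 n) as [[l2 H2] S2']. split; [|apply ss_T_minus; auto].
    exists (l1 ++ l2). intros x hx. apply in_or_app. unfold fminus in hx.
    destruct (Req_dec (a n x) 0) as [e1|e1]; [|left; auto].
    destruct (Req_dec (a' n x) 0) as [e2|e2]; [|right; auto]. exfalso; apply hx; rewrite e1, e2; ring.
  - apply (cv_squeeze0 _ (fun n => 2 * S2 (TW m (fminus (a n) f)) + 2 * S2 (TW m (fminus (a' n) g)))).
    + intros n.
      assert (s1 : ss (TW m (fminus (a n) f))) by (apply ss_TW_minus; auto; apply (ssTW_of_T m b c); apply Ha1).
      assert (s2 : ss (TW m (fminus (a' n) g))) by (apply ss_TW_minus; auto; apply (ssTW_of_T m b c); apply Hb1).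
      split.
      * apply S2_nonneg. apply (ss_ext (fun i => TW m (fminus (a n) f) i + (-1) * TW m (fminus (a' n) g) i)).
        { intros; unfold TW, fminus; ring. } apply ss_plus; auto; apply ss_scal; auto.
      * rewrite (S2_ext _ (fun i => TW m (fminus (a n) f) i + (-1) * TW m (fminus (a' n) g) i)) by (intros; unfold TW, fminus; ring).
        eapply Rle_trans; [apply S2_plus_le; auto; apply ss_scal; auto|]. rewrite S2_scal by auto. lra.
    + replace 0 with (2 * 0 + 2 * 0) by ring. apply CV_plus; apply CV_mult; auto;
      intros e He; exists 0%nat; intros; unfold R_dist; rewrite Rminus_diag, Rabs_R0; auto.
  - intros eps He. destruct (Ha3 (eps/4)) as [N1 H1]; [lra|]. destruct (Hb3 (eps/4)) as [N2 H2]; [lra|].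
    exists (max N1 N2). intros n k Hn Hk. specialize (H1 n k ltac:(lia) ltac:(lia)). specialize (H2 n k ltac:(lia) ltac:(lia)).
    assert (s1 : ss (TQ b c (fminus (a n) (a k)))) by (apply (ssTQ_of_T m); apply ss_T_minus; [apply Ha1|apply Ha1]).
    assert (s2 : ss (TQ b c (fminus (a' n) (a' k)))) by (apply (ssTQ_of_T m); apply ss_T_minus; [apply Hb1|apply Hb1]).
    rewrite (S2_ext _ (fun i => TQ b c (fminus (a n) (a k)) i + (-1) * TQ b c (fminus (a' n) (a' k)) i))
      by (intros [x|p]; unfold TQ, TW, TE, fminus; simpl; ring).
    eapply Rle_lt_trans; [apply S2_plus_le; auto; apply ss_scal; auto|]. rewrite S2_scal by auto. lra.
Qed.

Lemma RD_closed {V} (m : V -> R) b c (h : nat -> V -> R) (f : V -> R) :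
  (forall x, 0 < m x) -> (forall n, RD m b c (h n)) -> ss (T m b c f) ->
  Un_cv (fun n => S2 (T m b c (fminus (h n) f))) 0 -> RD m b c f.
Proof.
  intros Hm Hh Hf Hcv.
  assert (Hap : forall n, exists g, finsuppR g /\ ss (T m b c g) /\ ss (T m b c (h n)) /\
       S2 (T m b c (fminus g (h n))) < / (INR n + 1)).
  { intros n. destruct (Hh n) as [hW [a [Ha1 [Ha2 Ha3]]]].
    destruct (A_core m b c (h n) a Hm hW (fun k => proj2 (Ha1 k)) Ha2 Ha3) as [HsT Hc].
    destruct (Hc (/ (INR n + 1))) as [N HN]. { apply Rinv_0_lt_compat. pose proof (pos_INR n); lra. }
    exists (a N). split; [apply Ha1|]. split; [apply Ha1|]. split; auto.
    specialize (HN N (le_n _)). unfold R_dist in HN. rewrite Rminus_0_r in HN.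
    eapply Rle_lt_trans; [apply Rle_abs| exact HN]. }
  set (g := fun n => proj1_sig (constructive_indefinite_description _ (Hap n))).
  assert (Hg : forall n, finsuppR (g n) /\ ss (T m b c (g n)) /\ ss (T m b c (h n)) /\
       S2 (T m b c (fminus (g n) (h n))) < / (INR n + 1)).
  { intros n. unfold g. destruct constructive_indefinite_description; auto. }
  assert (Hconv : Un_cv (fun n => S2 (T m b c (fminus (g n) f))) 0).
  { apply (cv_squeeze0 _ (fun n => 2 * (/ (INR n + 1)) + 2 * S2 (T m b c (fminus (h n) f)))).
    - intros n. destruct (Hg n) as [_ [s1 [s2 s3]]].
      assert (d1 : ss (T m b c (fminus (g n) (h n)))) by (apply ss_T_minus; auto).
      assert (d2 : ss (T m b c (fminus (h n) f))) by (apply ss_T_minus; auto).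
      split; [apply S2_nonneg; apply ss_T_minus; auto|].
      rewrite (S2_ext _ (fun i => T m b c (fminus (g n) (h n)) i + T m b c (fminus (h n) f) i))
        by (intros i; rewrite !T_minus; ring).
      eapply Rle_trans; [apply S2_plus_le; auto|]. lra.
    - replace 0 with (2 * 0 + 2 * 0) by ring. apply CV_plus; apply CV_mult; auto;
      try (intros e He; exists 0%nat; intros; unfold R_dist; rewrite Rminus_diag, Rabs_R0; auto).
      intros e He. destruct (INR_unbounded (/ e)) as [N HN]. exists N. intros n Hn.
      unfold R_dist. rewrite Rminus_0_r.
      assert (Hn' : INR N <= INR n) by (apply le_INR; lia).
      pose proof (pos_INR N).
      assert (0 < / e) by (apply Rinv_0_lt_compat; lra).
      rewrite Rabs_right by (apply Rle_ge; left; apply Rinv_0_lt_compat; lra).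
      apply (Rmult_lt_reg_r (INR n + 1)); [lra|]. rewrite Rinv_l by lra.
      apply (Rmult_lt_reg_l (/ e)); [auto|]. rewrite <- Rmult_assoc, Rinv_l by lra. lra. }
  split; [apply (ssTW_of_T m b c); auto|].
  exists g. split; [|split].
  - intros n; destruct (Hg n) as [h1 [h2 _]]; auto.
  - apply (cv_squeeze0 _ (fun n => S2 (T m b c (fminus (g n) f)))); [|exact Hconv]. intros n. destruct (Hg n) as [_ [s1 _]].
    assert (d : ss (T m b c (fminus (g n) f))) by (apply ss_T_minus; auto).
    split; [apply S2_nonneg; apply (ssTW_of_T m b c); auto| apply S2_TW_le; auto].
  - intros eps He. destruct (Hconv (eps/4)) as [N HN]; [lra|]. exists N. intros n k Hn Hk.
    pose proof (HN n Hn) as h1. pose proof (HN k Hk) as h2. unfold R_dist in *. rewrite Rminus_0_r in *.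
    destruct (Hg n) as [_ [s1 _]]. destruct (Hg k) as [_ [s2 _]].
    assert (d1 : ss (T m b c (fminus (g n) f))) by (apply ss_T_minus; auto).
    assert (d2 : ss (T m b c (fminus (g k) f))) by (apply ss_T_minus; auto).
    assert (d3 : ss (T m b c (fminus (g n) (g k)))) by (apply ss_T_minus; auto).
    eapply Rle_lt_trans; [apply (S2_TQ_le m); auto|].
    rewrite (S2_ext _ (fun i => T m b c (fminus (g n) f) i + (-1) * T m b c (fminus (g k) f) i))
        by (intros i; rewrite !T_minus; ring).
    eapply Rle_lt_trans; [apply S2_plus_le; auto; apply ss_scal; auto|]. rewrite S2_scal by auto.
    pose proof (Rle_abs (S2 (T m b c (fminus (g n) f)))). pose proof (Rle_abs (S2 (T m b c (fminus (g k) f)))). lra.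
Qed.


Lemma T_comp_le {V} m b c (f g : V -> R) :
  (forall x, Rabs (g x) <= Rabs (f x)) -> (forall x y, Rabs (g x - g y) <= Rabs (f x - f y)) ->
  forall i, Rabs (T m b c g i) <= Rabs (T m b c f i).
Proof.
  intros H1 H2 [x|[x|p]]; unfold T, TQ, TW, TE; simpl; rewrite !Rabs_mult; apply Rmult_le_compat_l; auto; apply Rabs_pos.
Qed.

Lemma T_compare {V} m b c (f g : V -> R) :
  (forall x, Rabs (g x) <= Rabs (f x)) -> (forall x y, Rabs (g x - g y) <= Rabs (f x - f y)) ->
  ss (T m b c f) -> ss (T m b c g) /\ S2 (T m b c g) <= S2 (T m b c f).
Proof.
  intros H1 H2 Hf. apply S2_compare; auto.
  intros [x|[x|p]]; unfold T, TQ, TW, TE; simpl; rewrite !Rabs_mult; apply Rmult_le_compat_l; auto; apply Rabs_pos.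
Qed.

Lemma Rmax0_lip (a b : R) : Rabs (Rmax a 0 - Rmax b 0) <= Rabs (a - b).
Proof. unfold Rmax; repeat destruct Rle_dec; unfold Rabs; repeat destruct Rcase_abs; lra. Qed.
Lemma Rmin_lip (a b n : R) : Rabs (Rmin a n - Rmin b n) <= Rabs (a - b).
Proof. unfold Rmin; repeat destruct Rle_dec; unfold Rabs; repeat destruct Rcase_abs; lra. Qed.
Lemma Rmax0_abs (a : R) : Rabs (Rmax a 0) <= Rabs a.
Proof. unfold Rmax; repeat destruct Rle_dec; unfold Rabs; repeat destruct Rcase_abs; lra. Qed.

Lemma extract_real {V} (m : V -> R) b c :
  (forall x, 0 < m x) -> (forall x y, 0 <= b x y) -> (forall x, 0 <= c x) ->
  ~ form_eq (QN m b c) (QD m b c) -> exists f, ss (T m b c f) /\ ~ RD m b c f.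
Proof.
  intros Hm Hb Hc Hne. assert (Hm0 : forall x, 0 <= m x) by (intros x; specialize (Hm x); lra).
  destruct (notfe_exists m b c Hm Hb Hc Hne) as [u [Hu Hnu]].
  apply QN_dom_iff in Hu; auto. destruct Hu as [H1 H2].
  destruct (classic (RD m b c (cRe u))) as [R1|R1]; [|exists (cRe u); auto].
  destruct (classic (RD m b c (cIm u))) as [R2|R2]; [|exists (cIm u); auto].
  exfalso. apply Hnu. pose proof (RD_to_QD m b c _ _ Hm Hb Hc R1 R2) as HQ.
  replace u with (fun x => (cRe u x, cIm u x)); auto.
  apply functional_extensionality; intros x; unfold cRe, cIm; destruct (u x); auto.
Qed.

Lemma extract_nonneg {V} (m : V -> R) b c (g : V -> R) :
  ss (T m b c g) -> ~ RD m b c g -> exists f, (forall x, 0 <= f x) /\ ss (T m b c f) /\ ~ RD m b c f.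
Proof.
  intros Hg Hn.
  set (gp := fun x => Rmax (g x) 0). set (gm := fun x => Rmax (- g x) 0).
  assert (Sp : ss (T m b c gp)).
  { apply (T_compare m b c g); auto; intros; unfold gp; [apply Rmax0_abs| apply Rmax0_lip]. }
  assert (Sm : ss (T m b c gm)).
  { apply (T_compare m b c g); auto; intros; unfold gm.
    - eapply Rle_trans; [apply Rmax0_abs| rewrite Rabs_Ropp; lra].
    - eapply Rle_trans; [apply Rmax0_lip|]. replace (- g x - - g y) with (- (g x - g y)) by ring. rewrite Rabs_Ropp; lra. }
  destruct (classic (RD m b c gp)) as [Rp|Rp]; [|exists gp; split; [intros; apply Rmax_r|auto]].
  destruct (classic (RD m b c gm)) as [Rm|Rm]; [|exists gm; split; [intros; apply Rmax_r|auto]].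
  exfalso. apply Hn. apply (RD_ext m b c (fminus gp gm)); [|apply RD_minus; auto].
  intros x; unfold fminus, gp, gm, Rmax; repeat destruct Rle_dec; lra.
Qed.

Lemma extract_bounded {V} (m : V -> R) b c (f : V -> R) :
  (forall x, 0 < m x) -> (forall x, 0 <= f x) -> ss (T m b c f) -> ~ RD m b c f ->
  exists g M, (forall x, 0 <= g x <= M) /\ ss (T m b c g) /\ ~ RD m b c g.
Proof.
  intros Hm Hf0 Hf Hn.
  set (h := fun (n : nat) x => Rmin (f x) (INR n)).
  assert (Sh : forall n, ss (T m b c (h n))).
  { intros n. apply (T_compare m b c f); auto; intros; unfold h; [|apply Rmin_lip].
    specialize (Hf0 x). pose proof (pos_INR n). unfold Rmin; destruct Rle_dec; unfold Rabs; repeat destruct Rcase_abs; lra. }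
  destruct (classic (forall n, RD m b c (h n))) as [Hall|Hex].
  - exfalso. apply Hn. apply (RD_closed m b c h f Hm Hall Hf).
    set (p := fun (n : nat) x => Rmax (f x - INR n) 0).
    apply (Un_cv_ext (fun n => S2 (T m b c (p n)))).
    { intros n. apply S2_ext_sq. intros i.
      assert (E : T m b c (fminus (h n) f) i = - T m b c (p n) i).
      { destruct i as [x|[x|q]]; unfold T, TQ, TW, TE, fminus, h, p; simpl;
        unfold Rmin, Rmax; repeat destruct Rle_dec; try ring; lra. }
      rewrite E; ring. }
    apply (dominated _ (T m b c f)); auto.
    + intros n. apply T_comp_le; intros; unfold p.
      * specialize (Hf0 x). pose proof (pos_INR n). unfold Rmax; destruct Rle_dec; unfold Rabs; repeat destruct Rcase_abs; lra.
      * eapply Rle_trans; [apply Rmax0_lip|]. right; f_equal; ring.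
    + intros i. replace 0 with (T m b c (fun _ => 0) i) by (destruct i as [x|[x|q]]; unfold T, TQ, TW, TE; simpl; ring).
      apply T_cv. intros x. destruct (INR_unbounded (f x)) as [N HN].
      intros e He. exists N. intros n Hn'. unfold R_dist, p.
      assert (INR N <= INR n) by (apply le_INR; lia).
      unfold Rmax; destruct Rle_dec; [|lra]. rewrite Rminus_diag, Rabs_R0; auto.
  - apply not_all_ex_not in Hex. destruct Hex as [n Hn']. exists (h n), (INR n).
    split; [|split; auto]. intros x; unfold h. specialize (Hf0 x). pose proof (pos_INR n).
    unfold Rmin; destruct Rle_dec; lra.
Qed.


Definition delta {V} (x : V) : V -> R := fun y => if excluded_middle_informative (y = x) then 1 else 0.

Definition sl1 {V} (x : V) (r : V -> R) : V * V -> R :=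
  fun p => if excluded_middle_informative (fst p = x) then r (snd p) else 0.
Definition sl2 {V} (x : V) (r : V -> R) : V * V -> R :=
  fun p => if excluded_middle_informative (snd p = x) then r (fst p) else 0.

Lemma slice1 {V} (x : V) r s : has_sum r s -> has_sum (sl1 x r) s.
Proof.
  intros H. apply (has_sum_embed (fun q => (x, q))).
  - intros a a' h; inversion h; auto.
  - intros [p q] h. unfold sl1; simpl. destruct excluded_middle_informative; auto. subst. exfalso; apply (h q); auto.
  - eapply has_sum_ext; [|apply H]. intros q; unfold sl1; simpl. destruct excluded_middle_informative; tauto.
Qed.

Lemma slice2 {V} (x : V) r s : has_sum r s -> has_sum (sl2 x r) s.
Proof.
  intros H. apply (has_sum_embed (fun q => (q, x))).
  - intros a a' h; inversion h; auto.
  - intros [p q] h. unfold sl2; simpl. destruct excluded_middle_informative; auto. subst. exfalso; apply (h p); auto.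
  - eapply has_sum_ext; [|apply H]. intros q; unfold sl2; simpl. destruct excluded_middle_informative; tauto.
Qed.

Definition rowf {V} (b : V -> V -> R) (x : V) (v : V -> R) : V -> R := fun y => b x y * (v x - v y).

Lemma pair_identity {V} (b : V -> V -> R) x (v : V -> R) :
  (forall x y, 0 <= b x y) -> (forall x y, b x y = b y x) -> (forall x, b x x = 0) ->
  forall p, TE b v p * TE b (delta x) p = /2 * sl1 x (rowf b x v) p + /2 * sl2 x (rowf b x v) p.
Proof.
  intros Hb Hs H0 [p q]. rewrite TE_prod by auto. unfold sl1, sl2, rowf, delta; simpl.
  repeat destruct excluded_middle_informative; subst; try rewrite H0; try rewrite (Hs q p); try ring.
  all: try (exfalso; auto; fail). all: try field. all: rewrite (Hs _ x); field.
Qed.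

Lemma TE_delta_sum {V} (b : V -> V -> R) x (v : V -> R) :
  (forall x y, 0 <= b x y) -> (forall x y, b x y = b y x) -> (forall x, b x x = 0) ->
  summable (rowf b x v) -> has_sum (fun p => TE b v p * TE b (delta x) p) (tsum (rowf b x v)).
Proof.
  intros Hb Hs H0 Hr. pose proof (tsum_spec _ Hr) as H.
  apply (has_sum_ext (fun p => /2 * sl1 x (rowf b x v) p + /2 * sl2 x (rowf b x v) p)).
  { intros; rewrite pair_identity; auto. }
  replace (tsum (rowf b x v)) with (/2 * tsum (rowf b x v) + /2 * tsum (rowf b x v)) by field.
  apply has_sum_plus; apply has_sum_scal; [apply slice1|apply slice2]; auto.
Qed.

Lemma TW_delta_sum {V} (w : V -> R) x (v : V -> R) : 0 <= w x ->
  has_sum (fun y => TW w v y * TW w (delta x) y) (w x * v x).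
Proof.
  intros Hw. replace (w x * v x) with (TW w v x * TW w (delta x) x).
  - apply (has_sum_single (fun y => TW w v y * TW w (delta x) y) x). intros y hy. unfold TW, delta. destruct excluded_middle_informative; [contradiction|ring].
  - rewrite TW_prod by auto. unfold delta. destruct excluded_middle_informative; [ring|tauto].
Qed.

Lemma rowf_delta {V} (b : V -> V -> R) x : (forall x, b x x = 0) -> forall y, rowf b x (delta x) y = b x y.
Proof. intros H0 y. unfold rowf, delta. repeat destruct excluded_middle_informative; subst; try rewrite H0; try ring; tauto. Qed.

Lemma B2_T_delta {V} m b c x (v : V -> R) :
  (forall x, 0 <= m x) -> (forall x, 0 <= c x) ->
  (forall x y, 0 <= b x y) -> (forall x y, b x y = b y x) -> (forall x, b x x = 0) ->
  summable (fun y => b x y) -> ss (T m b c v) -> summable (rowf b x v) ->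
  ss (T m b c (delta x)) /\ B2 (T m b c v) (T m b c (delta x)) = m x * v x + c x * v x + tsum (rowf b x v).
Proof.
  intros Hm Hc Hb Hs H0 Hrow Hv Hr.
  assert (Sd : ss (T m b c (delta x))).
  { apply ss_T_iff; split; [|apply ss_sum_iff; split].
    - exists (m x * delta x x). apply TW_delta_sum; auto.
    - exists (c x * delta x x). apply TW_delta_sum; auto.
    - exists (tsum (rowf b x (delta x))). apply TE_delta_sum; auto.
      apply (summable_ext (fun y => b x y)); auto. intros; symmetry; apply rowf_delta; auto. }
  split; auto.
  rewrite (B2_sum (T m b c v) (T m b c (delta x))) by auto. simpl.
  pose proof (proj2 (proj1 (ss_T_iff _ _ _ _) Hv)) as Qv.
  pose proof (proj2 (proj1 (ss_T_iff _ _ _ _) Sd)) as Qd.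
  change (B2 (TW m v) (TW m (delta x)) + B2 (TQ b c v) (TQ b c (delta x)) = m x * v x + c x * v x + tsum (rowf b x v)).
  rewrite B2_TQ by auto.
  unfold B2 at 1. rewrite (tsum_eq _ _ (TW_delta_sum m x v (Hm x))).
  unfold B2 at 1. rewrite (tsum_eq _ _ (TW_delta_sum c x v (Hc x))).
  unfold B2. rewrite (tsum_eq _ _ (TE_delta_sum b x v Hb Hs H0 Hr)). ring.
Qed.

Lemma B2_scal_r {I} (g h : I -> R) t : ss g -> ss h -> B2 g (fun i => t * h i) = t * B2 g h.
Proof. intros. unfold B2. rewrite (tsum_ext _ (fun i => t * (g i * h i))) by (intros; ring).
  apply tsum_scal, ss_prod; auto. Qed.

Lemma variation {I} (g h : I -> R) : ss g -> ss h ->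
  (forall t, S2 g <= S2 (fun i => g i + t * h i)) -> B2 g h = 0.
Proof.
  intros Hg Hh H.
  assert (E : forall t, S2 (fun i => g i + t * h i) = S2 g + 2 * t * B2 g h + t * t * S2 h).
  { intros t. rewrite S2_plus by (auto; apply ss_scal; auto). rewrite B2_scal_r, S2_scal; auto. ring. }
  pose proof (S2_nonneg h Hh) as K0.
  set (B := B2 g h). set (K := S2 h).
  specialize (H (- B / (K + 1))). rewrite E in H. fold B K in H.
  fold K in K0. assert (Hk1 : K + 1 <> 0) by (apply Rgt_not_eq; lra).
  assert (Hp : 0 <= B * B * (- 2 * (K + 1) + K) / ((K + 1) * (K + 1))).
  { replace (B * B * (- 2 * (K + 1) + K) / ((K + 1) * (K + 1))) with (2 * (- B / (K + 1)) * B + (- B / (K + 1)) * (- B / (K + 1)) * K) by (field; auto). lra. }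
  assert (Hq : B * B * (- 2 * (K + 1) + K) <= 0).
  { pose proof (Rle_0_sqr B). unfold Rsqr in *. nra. }
  assert (Hr : 0 <= B * B * (- 2 * (K + 1) + K)).
  { apply (Rmult_le_reg_r (/ ((K + 1) * (K + 1)))). apply Rinv_0_lt_compat; nra. rewrite Rmult_0_l. unfold Rdiv in Hp. lra. }
  assert (B * B = 0) by nra. apply Rsqr_0_uniq; unfold Rsqr; auto.
Qed.


Lemma inf_exists {X} (P : X -> Prop) (F : X -> R) : (exists x, P x) -> (forall x, P x -> 0 <= F x) ->
  exists d, (forall x, P x -> d <= F x) /\ (forall eps, eps > 0 -> exists x, P x /\ F x < d + eps).
Proof.
  intros [x0 Hx0] HF.
  set (E := fun r => exists x, P x /\ r = - F x).
  assert (HB : bound E) by (exists 0; intros r [x [Hx ->]]; specialize (HF x Hx); lra).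
  assert (HE : exists r, E r) by (exists (- F x0), x0; auto).
  destruct (completeness E HB HE) as [L [Hub Hlub]].
  exists (- L). split.
  - intros x Hx. assert (- F x <= L) by (apply Hub; exists x; auto). lra.
  - intros eps He. destruct (classic (exists x, P x /\ F x < - L + eps)) as [|Hno]; auto. exfalso.
    assert (L <= L - eps); [|lra]. apply Hlub. intros r [x [Hx ->]].
    destruct (Rle_lt_dec (- F x) (L - eps)); auto. exfalso; apply Hno; exists x; split; auto; lra.
Qed.

Lemma inv_to0 (a : nat -> R) K : 0 <= K -> (forall n, 0 <= a n <= K / (INR n + 1)) -> Un_cv a 0.
Proof.
  intros HK H e He. destruct (INR_unbounded (K / e)) as [N HN]. exists N. intros n Hn.
  specialize (H n). unfold R_dist. rewrite Rminus_0_r, Rabs_right by lra.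
  assert (INR N <= INR n) by (apply le_INR; lia). pose proof (pos_INR N).
  assert (K / (INR n + 1) < e); [|lra].
  assert (HK2 : K < e * (INR n + 1)). { assert (e * (K / e) = K) by (field; lra).
    assert (e * INR N > e * (K / e)) by (apply Rmult_gt_compat_l; auto).
    assert (e * INR N <= e * INR n) by (apply Rmult_le_compat_l; lra). lra. }
  apply (Rmult_lt_reg_r (INR n + 1)); [lra|].
  replace (K / (INR n + 1) * (INR n + 1)) with K by (field; lra). lra.
Qed.

Lemma sq_to0 (a : nat -> R) K : 0 <= K -> (forall n, a n * a n <= K / (INR n + 1)) -> Un_cv a 0.
Proof.
  intros HK H. assert (H2 : Un_cv (fun n => a n * a n) 0).
  { apply (inv_to0 _ K HK). intros n; split; [nra|auto]. }
  intros e He. destruct (H2 (e*e)) as [N HN]; [nra|]. exists N. intros n Hn. specialize (HN n Hn).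
  unfold R_dist in *. rewrite Rminus_0_r in *. 
  rewrite Rabs_right in HN by nra. pose proof (Rabs_pos (a n)). rewrite (sq_abs (a n)) in HN. nra.
Qed.

Lemma cv_ge (u : nat -> R) L d : Un_cv u L -> (forall n, d <= u n) -> d <= L.
Proof.
  intros H Hd. destruct (Rle_lt_dec d L) as [|Hl]; auto. exfalso.
  destruct (H (d - L)) as [N HN]; [lra|]. specialize (HN N (le_n _)). specialize (Hd N).
  unfold R_dist in HN. apply Rabs_def2 in HN. lra.
Qed.

Lemma S2_mid {I} (g h : I -> R) : ss g -> ss h ->
  S2 (fun i => g i - h i) = 2 * S2 g + 2 * S2 h - 4 * S2 (fun i => (g i + h i) / 2).
Proof.
  intros Hg Hh. rewrite (S2_ext (fun i => (g i + h i) / 2) (fun i => /2 * (g i + h i))) by (intros; unfold Rdiv; ring).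
  rewrite S2_scal by (apply ss_plus; auto). rewrite S2_plus, S2_minus by auto. field.
Qed.

Definition clampM (M t : R) : R := Rmin (Rmax t 0) M.
Lemma clamp_lip M a b : Rabs (clampM M a - clampM M b) <= Rabs (a - b).
Proof. unfold clampM, Rmin, Rmax; repeat destruct Rle_dec; unfold Rabs; repeat destruct Rcase_abs; lra. Qed.
Lemma clamp_abs M a : 0 <= M -> Rabs (clampM M a) <= Rabs a.
Proof. intros. unfold clampM, Rmin, Rmax; repeat destruct Rle_dec; unfold Rabs; repeat destruct Rcase_abs; lra. Qed.
Lemma clamp_id M a : 0 <= a <= M -> clampM M a = a.
Proof. intros. unfold clampM, Rmin, Rmax; repeat destruct Rle_dec; lra. Qed.
Lemma clamp_range M a : 0 <= M -> 0 <= clampM M a <= M.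
Proof. intros. unfold clampM, Rmin, Rmax; repeat destruct Rle_dec; lra. Qed.

Lemma cv_const (r : R) : Un_cv (fun _ : nat => r) r.
Proof. intros e He; exists 0%nat; intros; unfold R_dist; rewrite Rminus_diag, Rabs_R0; auto. Qed.

Lemma inv_bound (n N : nat) : (n >= N)%nat -> / (INR n + 1) <= / (INR N + 1).
Proof. intros H. apply Rinv_le_contravar; [pose proof (pos_INR N); lra| apply Rplus_le_compat_r, le_INR; lia]. Qed.

Lemma small4 e (N : nat) : e > 0 -> INR N > 4 / e -> 4 * / (INR N + 1) < e.
Proof. intros He H. pose proof (pos_INR N).
  assert (4 < e * (INR N + 1)). { assert (e * (4 / e) = 4) by (field; lra).
    assert (e * INR N > e * (4 / e)) by (apply Rmult_gt_compat_l; auto). lra. }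
  apply (Rmult_lt_reg_r (INR N + 1)); [lra|]. rewrite Rmult_assoc, Rinv_l by lra. lra. Qed.

Lemma cauchy_arith (mx e D : R) (n k N : nat) : mx > 0 -> e > 0 -> (n >= N)%nat -> (k >= N)%nat ->
  INR N > 4 / (mx * (e * e)) -> mx * (D * D) <= 2 * / (INR n + 1) + 2 * / (INR k + 1) -> Rabs D < e.
Proof.
  intros Hmx He Hn Hk HN HD. pose proof (inv_bound n N Hn). pose proof (inv_bound k N Hk).
  assert (Hp : mx * (e * e) > 0) by (apply Rmult_gt_0_compat; nra).
  assert (H4 : 4 * / (INR N + 1) < mx * (e * e)) by (apply small4; auto).
  assert (D * D < e * e). { apply (Rmult_lt_reg_l mx); auto. lra. }
  rewrite (sq_abs D) in H1. pose proof (Rabs_pos D). nra.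
Qed.


Definition Adm {V} m b c (f w : V -> R) := ss (T m b c w) /\ finsuppR (fminus w f).

Lemma Adm_mid {V} m b c (f a a' : V -> R) : Adm m b c f a -> Adm m b c f a' -> Adm m b c f (fun x => (a x + a' x) / 2).
Proof.
  intros [H1 [l1 L1]] [H2 [l2 L2]]. split.
  - apply (ss_ext (fun i => /2 * (T m b c a i + T m b c a' i))).
    { intros [x|[x|p]]; unfold T, TQ, TW, TE; simpl; field. }
    apply ss_scal, ss_plus; auto.
  - exists (l1 ++ l2). intros x hx. apply in_or_app. unfold fminus in *.
    destruct (Req_dec (a x - f x) 0) as [e1|e1]; [|left; auto].
    destruct (Req_dec (a' x - f x) 0) as [e2|e2]; [|right; auto]. exfalso; apply hx. lra.
Qed.

Lemma Adm_clamp {V} m b c (f a : V -> R) M : 0 <= M -> (forall x, 0 <= f x <= M) ->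
  Adm m b c f a -> Adm m b c f (fun x => clampM M (a x)).
Proof.
  intros HM Hf [H1 [l L]]. split.
  - apply (T_compare m b c a); auto; intros; [apply clamp_abs; auto| apply clamp_lip].
  - exists l. intros x hx. apply L. unfold fminus in *. intro h. apply hx.
    replace (a x) with (f x) by lra. rewrite clamp_id; auto. ring.
Qed.

Lemma Adm_add {V} m b c (f a psi : V -> R) : Adm m b c f a -> finsuppR psi -> ss (T m b c psi) ->
  Adm m b c f (fplus a psi).
Proof.
  intros [H1 [l1 L1]] [l2 L2] H2. split; [apply ss_T_plus; auto|].
  exists (l1 ++ l2). intros x hx. apply in_or_app. unfold fminus, fplus in *.
  destruct (Req_dec (a x - f x) 0) as [e1|e1]; [|left; auto].
  destruct (Req_dec (psi x) 0) as [e2|e2]; [|right; auto]. exfalso; apply hx. lra.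
Qed.

Lemma construct {V} m b c (f : V -> R) M :
  (forall x, 0 < m x) -> (forall x y, 0 <= b x y) -> (forall x y, b x y = b y x) -> (forall x, b x x = 0) ->
  (forall x, summable (fun y => b x y)) -> (forall x, 0 <= c x) -> 0 <= M ->
  (forall x, 0 <= f x <= M) -> ss (T m b c f) -> ~ RD m b c f ->
  exists v, (forall x, 0 <= v x <= M) /\ ss (T m b c v) /\ (exists x, v x <> 0) /\
    (forall x, summable (rowf b x v) /\ m x * v x + c x * v x + tsum (rowf b x v) = 0).
Proof.
  intros Hm Hb Hs H0 Hrow Hc HM Hf HTf HnRD.
  assert (Hm0 : forall x, 0 <= m x) by (intros x; specialize (Hm x); lra).
  destruct (inf_exists (Adm m b c f) (fun w => S2 (T m b c w))) as [d [Hd1 Hd2]].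
  { exists f. split; auto. exists []. intros x h; exfalso; apply h; unfold fminus; ring. }
  { intros w [Hw _]. apply S2_nonneg; auto. }
  assert (Hw : forall n, exists w, Adm m b c f w /\ S2 (T m b c w) < d + / (INR n + 1)).
  { intros n; apply Hd2; apply Rinv_0_lt_compat; pose proof (pos_INR n); lra. }
  set (w := fun n => proj1_sig (constructive_indefinite_description _ (Hw n))).
  assert (Hwp : forall n, Adm m b c f (w n) /\ S2 (T m b c (w n)) < d + / (INR n + 1)).
  { intros n; unfold w; destruct constructive_indefinite_description; auto. }
  assert (Hws : forall n, ss (T m b c (w n))) by (intros n; apply Hwp).
  assert (Hpara : forall a a' e1 e2, Adm m b c f a -> Adm m b c f a' -> S2 (T m b c a) <= d + e1 ->
      S2 (T m b c a') <= d + e2 -> S2 (T m b c (fminus a a')) <= 2 * e1 + 2 * e2).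
  { intros a a' e1 e2 Ha Ha' h1 h2.
    rewrite (S2_ext _ (fun i => T m b c a i - T m b c a' i)) by (intros; apply T_minus).
    rewrite S2_mid by (first [apply Ha | apply Ha']).
    assert (d <= S2 (fun i => (T m b c a i + T m b c a' i) / 2)).
    { rewrite (S2_ext _ (T m b c (fun x => (a x + a' x) / 2))).
      - apply Hd1, Adm_mid; auto.
      - intros [x|[x|p]]; unfold T, TQ, TW, TE; simpl; field. }
    lra. }
  assert (Hcw : forall n k, S2 (T m b c (fminus (w n) (w k))) <= 2 * / (INR n + 1) + 2 * / (INR k + 1)).
  { intros n k. apply Hpara; try apply Hwp; left; apply Hwp. }
  assert (Hsd : forall n k, ss (T m b c (fminus (w n) (w k)))) by (intros; apply ss_T_minus; auto).
  assert (Hcc : forall x, Cauchy_crit (fun n => w n x)).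
  { intros x e He.
    assert (Hpt : forall n k, m x * ((w n x - w k x) * (w n x - w k x)) <= 2 * / (INR n + 1) + 2 * / (INR k + 1)).
    { intros n k. eapply Rle_trans; [|apply Hcw].
      eapply Rle_trans; [|apply (S2_TW_le m b c); apply Hsd].
      replace (m x * ((w n x - w k x) * (w n x - w k x))) with (TW m (fminus (w n) (w k)) x * TW m (fminus (w n) (w k)) x)
        by (rewrite TW_prod; auto).
      apply S2_single_le. apply (ssTW_of_T m b c); apply Hsd. }
    destruct (INR_unbounded (4 / (m x * (e * e)))) as [N HN].
    exists N. intros n k Hn Hk. unfold R_dist. apply (cauchy_arith (m x) e _ n k N); auto. apply Hm. }
  set (v := fun x => proj1_sig (R_complete _ (Hcc x))).
  assert (Hv : forall x, Un_cv (fun n => w n x) (v x)) by (intros x; unfold v; destruct R_complete; auto).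
  assert (Hfat : forall n, ss (T m b c (fminus v (w n))) /\ S2 (T m b c (fminus v (w n))) <= 4 * / (INR n + 1)).
  { intros n. apply (fatou (fun k => T m b c (fminus (w k) (w n))) _ n).
    - apply T_cv. intros x. unfold fminus. apply CV_minus; [apply Hv| apply cv_const].
    - intros k Hk. split; [apply Hsd|]. eapply Rle_trans; [apply Hcw|].
      pose proof (inv_bound k n Hk). lra. }
  assert (HTv : ss (T m b c v)).
  { apply (ss_ext (T m b c (fplus (fminus v (w 0%nat)) (w 0%nat))));
      [intros i; destruct i as [x|[x|p]]; unfold T,TQ,TW,TE,fplus,fminus; simpl; ring|].
    apply ss_T_plus; [apply Hfat| apply Hws]. }
  assert (Hconv : Un_cv (fun n => S2 (T m b c (fminus (w n) v))) 0).
  { apply (inv_to0 _ 4); [lra|]. intros n. destruct (Hfat n) as [h1 h2].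
    rewrite (S2_ext_sq _ (T m b c (fminus v (w n)))) by (intros i; rewrite !T_minus; ring).
    split; [apply S2_nonneg; auto| unfold Rdiv; lra]. }
  assert (Hrange : forall x, 0 <= v x <= M).
  { intros x.
    assert (Hcl : forall n, S2 (T m b c (fminus (w n) (fun y => clampM M (w n y)))) <= 4 * / (INR n + 1)).
    { intros n. destruct (Hwp n) as [Ha Hlt].
      assert (Ac : Adm m b c f (fun y => clampM M (w n y))) by (apply Adm_clamp; auto).
      assert (S2 (T m b c (fun y => clampM M (w n y))) <= S2 (T m b c (w n))).
      { apply (T_compare m b c (w n)); [intros; apply clamp_abs; auto| intros; apply clamp_lip| apply Ha]. }
      eapply Rle_trans; [apply (Hpara _ _ (/ (INR n + 1)) (/ (INR n + 1))); auto; lra| lra]. }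
    assert (Hz : Un_cv (fun n => w n x - clampM M (w n x)) 0).
    { apply (sq_to0 _ (4 / m x)). { unfold Rdiv; apply Rmult_le_pos; [lra| left; apply Rinv_0_lt_compat; auto]. }
      intros n.
      assert (Hss : ss (T m b c (fminus (w n) (fun y => clampM M (w n y))))).
      { apply ss_T_minus; auto. apply (Adm_clamp m b c f (w n) M); auto; apply Hwp. }
      assert (m x * ((w n x - clampM M (w n x)) * (w n x - clampM M (w n x))) <= 4 * / (INR n + 1)).
      { eapply Rle_trans; [|apply Hcl]. eapply Rle_trans; [|apply (S2_TW_le m b c); auto].
        replace (m x * ((w n x - clampM M (w n x)) * (w n x - clampM M (w n x))))
          with (TW m (fminus (w n) (fun y => clampM M (w n y))) x * TW m (fminus (w n) (fun y => clampM M (w n y))) x)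
          by (rewrite TW_prod; auto).
        apply S2_single_le. apply (ssTW_of_T m b c); auto. }
      specialize (Hm x).
      apply (Rmult_le_reg_l (m x)); auto. replace (m x * (4 / m x / (INR n + 1))) with (4 * / (INR n + 1) * (m x * / m x)) by (unfold Rdiv; ring). rewrite Rinv_r by (apply Rgt_not_eq; lra).
      lra. }
    assert (Hz2 : Un_cv (fun n => w n x - clampM M (w n x)) (v x - clampM M (v x))).
    { apply CV_minus; [apply Hv|]. intros e He. destruct (Hv x e He) as [N HN]. exists N. intros n Hn.
      unfold R_dist in *. eapply Rle_lt_trans; [apply clamp_lip| apply HN; auto]. }
    pose proof (UL_sequence _ _ _ Hz2 Hz).
    pose proof (clamp_range M (v x) HM). lra. }
  assert (HdS : S2 (T m b c v) = d).
  { assert (C1 : Un_cv (fun n => S2 (T m b c (w n))) (S2 (T m b c v))).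
    { apply S2_cont; auto. eapply Un_cv_ext; [|apply Hconv]. intros n; apply S2_ext; intros; apply T_minus. }
    assert (C2 : Un_cv (fun n => S2 (T m b c (w n))) d).
    { assert (D : Un_cv (fun n => S2 (T m b c (w n)) - d) 0).
      { apply (inv_to0 _ 1); [lra|]. intros n. destruct (Hwp n) as [Ha Hlt]. pose proof (Hd1 _ Ha).
        unfold Rdiv; lra. }
      apply (Un_cv_ext (fun n => (S2 (T m b c (w n)) - d) + d)); [intros; ring|].
      pose proof (CV_plus _ _ _ _ D (cv_const d)) as HH. rewrite Rplus_0_l in HH. exact HH. }
    apply (UL_sequence _ _ _ C1 C2). }
  assert (Hmin : forall psi, finsuppR psi -> ss (T m b c psi) -> S2 (T m b c v) <= S2 (T m b c (fplus v psi))).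
  { intros psi Hp Hps. rewrite HdS.
    apply (cv_ge (fun n => S2 (T m b c (fplus (w n) psi)))).
    - apply S2_cont; [apply ss_T_plus; auto| intros; apply ss_T_plus; auto|].
      eapply Un_cv_ext; [|apply Hconv]. intros n; apply S2_ext; intros i; rewrite !T_plus, T_minus; ring.
    - intros n. apply Hd1. apply Adm_add; auto; apply Hwp. }
  assert (Heq : forall x, summable (rowf b x v) /\ m x * v x + c x * v x + tsum (rowf b x v) = 0).
  { intros x.
    assert (Hr : summable (rowf b x v)).
    { apply (summable_abs_compare _ (fun y => M * b x y)); [|apply summable_scal; auto].
      intros y. unfold rowf. rewrite Rabs_mult, (Rabs_right (b x y)) by (apply Rle_ge; auto).
      pose proof (Hrange x); pose proof (Hrange y). rewrite (Rmult_comm M). apply Rmult_le_compat_l; auto.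
      unfold Rabs; destruct Rcase_abs; lra. }
    destruct (B2_T_delta m b c x v Hm0 Hc Hb Hs H0 (Hrow x) HTv Hr) as [Sd HB].
    split; auto. rewrite <- HB. apply variation; auto.
    intros t. rewrite (S2_ext (fun i => T m b c v i + t * T m b c (delta x) i) (T m b c (fplus v (fscal t (delta x)))))
      by (intros i; rewrite T_plus, T_scal; auto).
    apply Hmin; [| apply ss_T_scal; auto].
    exists [x]. intros y hy. unfold fscal, delta in hy. destruct excluded_middle_informative; [left; auto| exfalso; apply hy; ring]. }
  assert (Hnz : exists x, v x <> 0).
  { destruct (classic (exists x, v x <> 0)) as [|Hno]; auto. exfalso. apply HnRD.
    assert (Hv0 : forall x, v x = 0) by (intros x; destruct (Req_dec (v x) 0); auto; exfalso; apply Hno; eauto).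
    split; [apply (ssTW_of_T m b c); auto|].
    exists (fun n => fminus f (w n)). split; [|split].
    - intros n. destruct (Hwp n) as [[Ha [l Hl]] _]. split; [|apply ss_T_minus; auto].
      exists l. intros x hx. apply Hl. unfold fminus in *. intro h; apply hx; lra.
    - apply (cv_squeeze0 _ (fun n => S2 (T m b c (fminus (w n) v)))); auto.
      intros n. assert (Hs1 : ss (T m b c (fminus (w n) v))) by (apply ss_T_minus; auto).
      rewrite (S2_ext_sq _ (TW m (fminus (w n) v))) by (intros y; unfold TW, fminus; rewrite Hv0; ring).
      split; [apply S2_nonneg; apply (ssTW_of_T m b c); auto| apply S2_TW_le; auto].
    - intros eps He. destruct (INR_unbounded (4 / eps)) as [N HN]. exists N. intros n k Hn Hk.
      rewrite (S2_ext_sq _ (TQ b c (fminus (w n) (w k)))) by (intros [y|p]; unfold TQ, TW, TE, fminus; simpl; ring).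
      eapply Rle_lt_trans; [apply (S2_TQ_le m); apply Hsd|]. eapply Rle_lt_trans; [apply Hcw|].
      pose proof (inv_bound n N Hn). pose proof (inv_bound k N Hk). pose proof (small4 eps N He HN). lra. }
  exists v. auto.
Qed.


Lemma tsum_zero {T} : tsum (fun _ : T => 0) = 0.
Proof. apply tsum_eq. intros e He. exists []. intros l _ _.
  replace (sum_list (fun _ : T => 0) l) with 0 by (induction l; simpl; auto; rewrite <- IHl; ring).
  rewrite Rminus_0_r, Rabs_R0; auto. Qed.

Theorem mainTheorem7 (V : Type) (m : V -> R) (b : V -> V -> R) (c : V -> R)
  (Hm : measure_space m) (Hg : is_graph b c)
  (Hne : ~ form_eq (QN m b c) (QD m b c)) :
  exists u : V -> R,
    (forall x, 0 <= u x) /\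
    QN_dom m b c (fun x => Cof (u x)) /\
    linfty (fun x => Cof (u x)) /\
    (exists x, u x <> 0) /\
    Ftilde b (fun x => Cof (u x)) /\
    (forall x, Cadd (Ltilde m b c (fun y => Cof (u y)) x) (Cof (u x)) = C0).
Proof.
  destruct Hm as [_ Hm]. destruct Hg as [Hc [Hb [H0 [Hs Hrow]]]].
  assert (Hm0 : forall x, 0 <= m x) by (intros x; specialize (Hm x); lra).
  destruct (extract_real m b c Hm Hb Hc Hne) as [g [Hg1 Hg2]].
  destruct (extract_nonneg m b c g Hg1 Hg2) as [f [Hf0 [Hf1 Hf2]]].
  destruct (extract_bounded m b c f Hm Hf0 Hf1 Hf2) as [f' [M [HM1 [HM2 HM3]]]].
  destruct (construct m b c f' (Rmax M 0) Hm Hb Hs H0 Hrow Hc (Rmax_r _ _)) as [v [Hv1 [Hv2 [Hv3 Hv4]]]]; auto.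
  { intros x; specialize (HM1 x); pose proof (Rmax_l M 0); lra. }
  set (M' := Rmax M 0) in *.
  exists v. split; [intros x; apply Hv1|]. split; [|split; [|split; [auto|split]]].
  - apply QN_dom_iff; auto. split; [exact Hv2|].
    assert (Z : forall i, T m b c (fun _ => 0) i = 0) by (intros [x|[x|p]]; unfold T, TQ, TW, TE; simpl; ring). exact (proj1 (S2_zero _ Z)).
  - exists (M' * M'). intros x. unfold Cnorm2, Cof; simpl. specialize (Hv1 x). nra.
  - intros x. unfold abs_summableC.
    apply (summable_compare _ (fun y => M' * b x y)); [|apply summable_scal; auto].
    intros y. replace (Cnorm2 (Cscal (b x y) (Cof (v y)))) with ((b x y * v y) * (b x y * v y))
      by (unfold Cnorm2, Cscal, Cof; simpl; ring).
    specialize (Hv1 y). specialize (Hb x y).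
    rewrite sqrt_square by nra. split; [nra|]. rewrite Rmult_comm. apply Rmult_le_compat_r; lra.
  - intros x. destruct (Hv4 x) as [Hr Heq].
    unfold Ltilde, Cadd, Cscal, tsumC, Csub, Cof, C0; simpl. f_equal.
    + change (tsum (fun y => b x y * (v x - v y))) with (tsum (rowf b x v)).
      specialize (Hm x). field_simplify; [|lra]. replace (tsum (rowf b x v)) with (- (m x * v x + c x * v x)) by lra.
      field; lra.
    + rewrite (tsum_ext _ (fun _ => 0)) by (intros; ring). rewrite tsum_zero. ring.
Qed.
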